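(* Let $\omega$ be a Type (c) general obstacle with extreme edges $e_1,e_2,e_3,e_4$ such that no pair of extreme edges of $\omega$ is mutually visible, and for each $i$ let $s_i^\perp$ denote a perpendicular extreme visibility edge for $e_i$. Then $\{s_1^\perp,s_2^\perp,s_3^\perp,s_4^\perp\}$ is a minimum skeleton for $\omega$.
   Context: An obstacle $\omega$ is a simple polygon in $\mathbb{R}^2$ (a closed, bounded polygonal region without holes whose boundary does not intersect itself), assumed in general position (no three of its vertices are collinear); vertices and edges of $\omega$ are those of its boundary. $\omega$ is rectilinear if each edge is horizontal or vertical, and a rectilinear obstacle is rectilinearly-convex if any two points of $\omega$ can be joined by a shortest rectilinear path (made of horizontal and vertical segments, of minimum $\ell_1$ length) contained in $\omega$. A corner point of a rectilinear path is a point where a horizontal and a vertical segment of the path meet. A set $S$ of closed line segments is inside $\omega$ if the union of its elements is contained in $\omega$. Such an $S$ is a skeleton for $\omega$ if for every pair of points $p,q$ not in the interior of $\omega$ such that every shortest rectilinear path between $p$ and $q$ with at most one corner point meets the interior of $\omega$, each such path intersects some element of $S$; a minimum skeleton is one with the fewest segments. $B(\omega)$ is the smallest closed axis-parallel rectangle containing $\omega$; the extreme edges are the edges of $\omega$ lying on the boundary of $B(\omega)$ (exactly four: left, right, bottom, top); an extreme corner is a vertex of $\omega$ that is a common endpoint of two extreme edges. A general obstacle is a rectilinearly-convex obstacle with no extreme corners. Two parallel extreme edges overlap if the orthogonal projection of one onto the line containing the other meets the other; a non-overlapping pair of parallel extreme edges is positively (negatively) sloped if the segment joining their midpoints has positive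 (negative) gradient. A Type (c) general obstacle is a general obstacle in which neither pair of parallel extreme edges overlaps and the two pairs have different slopes. Two segments in $\omega$ are mutually visible if there are points $p_1$ on one and $p_2$ on the other such that the segment $p_1p_2$ is contained in $\omega$. Visibility edges are line segments contained in $\omega$, always taken of maximum length (extended at both ends as far as possible within $\omega$); a perpendicular extreme visibility edge for an extreme edge $e$ is a visibility edge with an endpoint on $e$ that is perpendicular to $e$. *)

(* Defs.v *)
From Stdlib Require Import Reals Lra Lia Arith List.
Open Scope R_scope.

Definition pt : Type := (R * R)%type.
Definition px (p : pt) : R := fst p.
Definition py (p : pt) : R := snd p.

Definition seg (a b : pt) (p : pt) : Prop :=
  exists t, 0 <= t <= 1 /\ px p = px a + t * (px b - px a)
                        /\ py p = py a + t * (py b - py a).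

Definition subset (A B : pt -> Prop) : Prop := forall p, A p -> B p.

Definition l1 (a b : pt) : R := Rabs (px b - px a) + Rabs (py b - py a).
Definition dinf (a b : pt) : R := Rmax (Rabs (px b - px a)) (Rabs (py b - py a)).

Definition nv (V : list pt) : nat := length V.
Definition vtx (V : list pt) (i : nat) : pt := nth i V (0, 0).
Definition nxt (V : list pt) (i : nat) : nat := Nat.modulo (S i) (nv V).
Definition edge_pts (V : list pt) (i : nat) : pt -> Prop := seg (vtx V i) (vtx V (nxt V i)).

Definition on_boundary (V : list pt) (p : pt) : Prop :=
  exists i, (i < nv V)%nat /\ edge_pts V i p.

Definition simple_polygon (V : list pt) : Prop :=
  (3 <= nv V)%nat /\ NoDup V /\
  forall i j p, (i < nv V)%nat -> (j < nv V)%nat -> i <> j ->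
    edge_pts V i p -> edge_pts V j p ->
    (j = nxt V i /\ p = vtx V j) \/ (i = nxt V j /\ p = vtx V i).

Definition collinear (a b c : pt) : Prop :=
  (px b - px a) * (py c - py a) - (py b - py a) * (px c - px a) = 0.

Definition general_position (V : list pt) : Prop :=
  forall i j k, (i < nv V)%nat -> (j < nv V)%nat -> (k < nv V)%nat ->
    i <> j -> j <> k -> i <> k -> ~ collinear (vtx V i) (vtx V j) (vtx V k).

Definition cont01 (g : R -> pt) : Prop :=
  forall t, 0 <= t <= 1 -> forall eps, 0 < eps ->
    exists d, 0 < d /\ forall s, 0 <= s <= 1 -> Rabs (s - t) < d ->
      dinf (g s) (g t) < eps.

Definition reach_off (V : list pt) (p q : pt) : Prop :=
  exists g : R -> pt, cont01 g /\ g 0 = p /\ g 1 = q /\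
    forall t, 0 <= t <= 1 -> ~ on_boundary V (g t).

(* the closed polygonal region: the boundary curve together with the bounded
   component(s) of its complement *)
Definition region (V : list pt) (p : pt) : Prop :=
  on_boundary V p \/
  (~ on_boundary V p /\
   exists M, forall q, reach_off V p q -> Rabs (px q) <= M /\ Rabs (py q) <= M).

Definition interior (A : pt -> Prop) (p : pt) : Prop :=
  exists eps, 0 < eps /\ forall q, dinf p q < eps -> A q.

Definition obstacle (V : list pt) : Prop := simple_polygon V /\ general_position V.

Definition rectilinear (V : list pt) : Prop :=
  forall i, (i < nv V)%nat ->
    px (vtx V i) = px (vtx V (nxt V i)) \/ py (vtx V i) = py (vtx V (nxt V i)).

Fixpoint rpath_in (A : pt -> Prop) (a : pt) (l : list pt) : Prop :=
  match l with
  | nil => True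
  | b :: l' => (px a = px b \/ py a = py b) /\ subset (seg a b) A /\ rpath_in A b l'
  end.
Fixpoint rpath_len (a : pt) (l : list pt) : R :=
  match l with
  | nil => 0
  | b :: l' => l1 a b + rpath_len b l'
  end.

Definition rect_convex (V : list pt) : Prop :=
  forall p q, region V p -> region V q ->
    exists l, rpath_in (region V) p l /\ last (p :: l) p = q /\ rpath_len p l = l1 p q.

Definition left_edge (V : list pt) (i : nat) : Prop :=
  (i < nv V)%nat /\ forall k, (k < nv V)%nat ->
    px (vtx V i) <= px (vtx V k) /\ px (vtx V (nxt V i)) <= px (vtx V k).
Definition right_edge (V : list pt) (i : nat) : Prop :=
  (i < nv V)%nat /\ forall k, (k < nv V)%nat ->
    px (vtx V k) <= px (vtx V i) /\ px (vtx V k) <= px (vtx V (nxt V i)).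
Definition bottom_edge (V : list pt) (i : nat) : Prop :=
  (i < nv V)%nat /\ forall k, (k < nv V)%nat ->
    py (vtx V i) <= py (vtx V k) /\ py (vtx V (nxt V i)) <= py (vtx V k).
Definition top_edge (V : list pt) (i : nat) : Prop :=
  (i < nv V)%nat /\ forall k, (k < nv V)%nat ->
    py (vtx V k) <= py (vtx V i) /\ py (vtx V k) <= py (vtx V (nxt V i)).

Definition extreme_edge (V : list pt) (i : nat) : Prop :=
  left_edge V i \/ right_edge V i \/ bottom_edge V i \/ top_edge V i.

Definition share_endpoint (V : list pt) (i j : nat) : Prop :=
  exists v, (v = vtx V i \/ v = vtx V (nxt V i)) /\ (v = vtx V j \/ v = vtx V (nxt V j)).

Definition no_extreme_corner (V : list pt) : Prop :=
  forall i j, extreme_edge V i -> extreme_edge V j -> i <> j -> ~ share_endpoint V i j.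

Definition general_obstacle (V : list pt) : Prop :=
  obstacle V /\ rectilinear V /\ rect_convex V /\ no_extreme_corner V.

Definition intervals_meet (a b c d : R) : Prop :=
  Rmax (Rmin a b) (Rmin c d) <= Rmin (Rmax a b) (Rmax c d).
Definition overlap_vert (V : list pt) (i j : nat) : Prop :=
  intervals_meet (py (vtx V i)) (py (vtx V (nxt V i))) (py (vtx V j)) (py (vtx V (nxt V j))).
Definition overlap_horiz (V : list pt) (i j : nat) : Prop :=
  intervals_meet (px (vtx V i)) (px (vtx V (nxt V i))) (px (vtx V j)) (px (vtx V (nxt V j))).

Definition midpt (a b : pt) : pt := ((px a + px b) / 2, (py a + py b) / 2).
Definition emid (V : list pt) (i : nat) : pt := midpt (vtx V i) (vtx V (nxt V i)).
(* sign of the gradient of the segment joining the midpoints *)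
Definition pos_sloped (V : list pt) (i j : nat) : Prop :=
  (py (emid V j) - py (emid V i)) * (px (emid V j) - px (emid V i)) > 0.
Definition neg_sloped (V : list pt) (i j : nat) : Prop :=
  (py (emid V j) - py (emid V i)) * (px (emid V j) - px (emid V i)) < 0.

Definition typeC (V : list pt) (iL iR iB iT : nat) : Prop :=
  general_obstacle V /\
  left_edge V iL /\ right_edge V iR /\ bottom_edge V iB /\ top_edge V iT /\
  ~ overlap_vert V iL iR /\ ~ overlap_horiz V iB iT /\
  ((pos_sloped V iL iR /\ neg_sloped V iB iT) \/
   (neg_sloped V iL iR /\ pos_sloped V iB iT)).

Definition mutually_visible (A : pt -> Prop) (s t : pt -> Prop) : Prop :=
  exists p1 p2, s p1 /\ t p2 /\ subset (seg p1 p2) A.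

Definition visibility_edge (A : pt -> Prop) (a b : pt) : Prop :=
  a <> b /\ subset (seg a b) A /\
  forall c d, subset (seg a b) (seg c d) -> subset (seg c d) A -> subset (seg c d) (seg a b).

Definition perp_ext_vis_edge (V : list pt) (s : pt * pt) (i : nat) : Prop :=
  let (a, b) := s in
  let u := vtx V i in let v := vtx V (nxt V i) in
  visibility_edge (region V) a b /\
  (seg u v a \/ seg u v b) /\
  (px b - px a) * (px v - px u) + (py b - py a) * (py v - py u) = 0.

Definition seg_of (s : pt * pt) : pt -> Prop := seg (fst s) (snd s).

Definition inside (V : list pt) (S : list (pt * pt)) : Prop :=
  forall s, In s S -> fst s <> snd s /\ subset (seg_of s) (region V).

(* the shortest rectilinear paths between p and q with at most one corner:
   the two L-shaped paths through c = (qx,py) or c = (px,qy) (they coincide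
   with the segment pq when p and q are aligned) *)
Definition Lpath (p q : pt) (k : bool) (x : pt) : Prop :=
  let c := if k then (px q, py p) else (px p, py q) in
  seg p c x \/ seg c q x.

Definition meets (A B : pt -> Prop) : Prop := exists x, A x /\ B x.

Definition skeleton (V : list pt) (S : list (pt * pt)) : Prop :=
  inside V S /\
  forall p q, ~ interior (region V) p -> ~ interior (region V) q ->
    (forall k, meets (Lpath p q k) (interior (region V))) ->
    forall k, exists s, In s S /\ meets (Lpath p q k) (seg_of s).

Definition set_size (S : list (pt * pt)) (n : nat) : Prop :=
  exists l, NoDup l /\ (forall s, In s l <-> In s S) /\ length l = n.

Definition minimum_skeleton (V : list pt) (S : list (pt * pt)) : Prop :=
  skeleton V S /\
  forall S' n n', skeleton V S' -> set_size S n -> set_size S' n' -> (n <= n')%nat.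

(* Main.v *)
Require Import Defs.
From Stdlib Require Import Reals List.
From Stdlib Require Import Lra Lia Arith Classical.
Require Import Defs.
Open Scope R_scope.

Definition btw (a b x : R) : Prop := (a <= x <= b) \/ (b <= x <= a).

Lemma pt_eta (p : pt) : p = (px p, py p).
Proof. destruct p; reflexivity. Qed.

Lemma seg_sym a b p : seg a b p -> seg b a p.
Proof.
  intros [t [Ht [Hx Hy]]]. exists (1 - t). split; [lra|]. split; [rewrite Hx|rewrite Hy]; ring.
Qed.

Lemma seg_l a b : seg a b a.
Proof. exists 0. split; [lra|]. split; ring. Qed.
Lemma seg_r a b : seg a b b.
Proof. exists 1. split; [lra|]. split; ring. Qed.

Lemma btw_lin a b t : 0 <= t <= 1 -> btw a b (a + t * (b - a)).
Proof.
  intros Ht. destruct (Rle_dec a b).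
  - left. split; nra.
  - right. split; nra.
Qed.

Lemma seg_btw_x a b p : seg a b p -> btw (px a) (px b) (px p).
Proof. intros [t [Ht [Hx Hy]]]. rewrite Hx. apply btw_lin; auto. Qed.
Lemma seg_btw_y a b p : seg a b p -> btw (py a) (py b) (py p).
Proof. intros [t [Ht [Hx Hy]]]. rewrite Hy. apply btw_lin; auto. Qed.

Lemma btw_param a b x : btw a b x -> exists t, 0 <= t <= 1 /\ x = a + t * (b - a).
Proof.
  intros H. destruct (Req_dec a b) as [E|E].
  - exists 0. split; [lra|]. subst. destruct H; lra.
  - set (t := (x - a) / (b - a)).
    assert (Et : t * (b - a) = x - a) by (unfold t; field; lra).
    exists t. split.
    + destruct H as [H|H].
      * assert (b - a > 0) by lra. split; nra.
      * assert (b - a < 0) by lra. split; nra.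
    + lra.
Qed.

Lemma seg_row a b p : py a = py b ->
  (seg a b p <-> py p = py a /\ btw (px a) (px b) (px p)).
Proof.
  intros E. split.
  - intros H. split.
    + destruct H as [t [_ [_ Hy]]]. rewrite Hy, E. ring.
    + apply seg_btw_x; auto.
  - intros [Hy Hb]. destruct (btw_param _ _ _ Hb) as [t [Ht Hx]].
    exists t. split; auto. split; auto. rewrite Hy, E. ring.
Qed.

Lemma seg_col a b p : px a = px b ->
  (seg a b p <-> px p = px a /\ btw (py a) (py b) (py p)).
Proof.
  intros E. split.
  - intros H. split.
    + destruct H as [t [_ [Hx _]]]. rewrite Hx, E. ring.
    + apply seg_btw_y; auto.
  - intros [Hx Hb]. destruct (btw_param _ _ _ Hb) as [t [Ht Hy]].
    exists t. split; auto. split; auto. rewrite Hx, E. ring.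
Qed.

Lemma seg_sub a b u v : seg a b u -> seg a b v -> subset (seg u v) (seg a b).
Proof.
  intros [t1 [H1 [X1 Y1]]] [t2 [H2 [X2 Y2]]] w [s [Hs [Xw Yw]]].
  exists (t1 + s * (t2 - t1)). split.
  - split; nra.
  - split; [rewrite Xw, X1, X2 | rewrite Yw, Y1, Y2]; ring.
Qed.

Definition phi (al be : R) (p : pt) : R := al * px p + be * py p.

Lemma seg_phi al be a b p : seg a b p ->
  exists t, 0 <= t <= 1 /\ phi al be p = phi al be a + t * (phi al be b - phi al be a).
Proof.
  intros [t [Ht [Hx Hy]]]. exists t. split; auto. unfold phi. rewrite Hx, Hy. ring.
Qed.

Lemma seg_phi_le al be a b p M : seg a b p -> phi al be a <= M -> phi al be b <= M ->
  phi al be p <= M.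
Proof. intros H Ha Hb. destruct (seg_phi al be _ _ _ H) as [t [Ht E]]. rewrite E. nra. Qed.

Ltac rabs := unfold Rabs in *; repeat (destruct Rcase_abs); lra.

Definition ext_edge (V : list pt) (al be : R) (i : nat) : Prop :=
  (i < nv V)%nat /\ forall k, (k < nv V)%nat ->
    phi al be (vtx V k) <= phi al be (vtx V i) /\ phi al be (vtx V k) <= phi al be (vtx V (nxt V i)).

Definition axis (al be : R) : Prop :=
  (al = 0 /\ (be = 1 \/ be = -1)) \/ (be = 0 /\ (al = 1 \/ al = -1)).

Lemma left_ext V i : left_edge V i -> ext_edge V (-1) 0 i.
Proof. intros [H1 H2]. split; auto. intros k Hk. destruct (H2 k Hk). unfold phi. lra. Qed.
Lemma right_ext V i : right_edge V i -> ext_edge V 1 0 i.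
Proof. intros [H1 H2]. split; auto. intros k Hk. destruct (H2 k Hk). unfold phi. lra. Qed.
Lemma bottom_ext V i : bottom_edge V i -> ext_edge V 0 (-1) i.
Proof. intros [H1 H2]. split; auto. intros k Hk. destruct (H2 k Hk). unfold phi. lra. Qed.
Lemma top_ext V i : top_edge V i -> ext_edge V 0 1 i.
Proof. intros [H1 H2]. split; auto. intros k Hk. destruct (H2 k Hk). unfold phi. lra. Qed.

Lemma nxt_lt V i : (0 < nv V)%nat -> (nxt V i < nv V)%nat.
Proof. intros H. unfold nxt. apply Nat.mod_upper_bound. lia. Qed.

Lemma nxt_val V i : (i < nv V)%nat -> nxt V i = if Nat.eq_dec (S i) (nv V) then 0%nat else S i.
Proof.
  intros H. unfold nxt. destruct (Nat.eq_dec (S i) (nv V)) as [E|E].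
  - rewrite E. apply Nat.Div0.mod_same.
  - apply Nat.mod_small. lia.
Qed.

Lemma nxt_neq V i : (3 <= nv V)%nat -> (i < nv V)%nat -> nxt V i <> i.
Proof. intros H3 H. rewrite nxt_val by auto. destruct Nat.eq_dec; lia. Qed.

Lemma nxt_nxt_neq V i : (3 <= nv V)%nat -> (i < nv V)%nat -> nxt V (nxt V i) <> i.
Proof.
  intros H3 H. assert (Hn : (nxt V i < nv V)%nat) by (apply nxt_lt; lia).
  rewrite (nxt_val V (nxt V i)) by auto. rewrite (nxt_val V i) by auto.
  repeat destruct Nat.eq_dec; lia.
Qed.

Lemma prev_ex V i : (3 <= nv V)%nat -> (i < nv V)%nat ->
  exists j, (j < nv V)%nat /\ nxt V j = i /\ j <> i /\ j <> nxt V i.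
Proof.
  intros H3 H. destruct i as [|i].
  - exists (nv V - 1)%nat. rewrite nxt_val by lia. rewrite (nxt_val V 0) by lia.
    repeat destruct Nat.eq_dec; repeat split; lia.
  - exists i. rewrite nxt_val by lia. rewrite (nxt_val V (S i)) by lia.
    repeat destruct Nat.eq_dec; repeat split; lia.
Qed.

Lemma bnd_le V al be i w : ext_edge V al be i -> on_boundary V w ->
  phi al be w <= phi al be (vtx V i).
Proof.
  intros [Hi HE] [j [Hj Hw]]. unfold edge_pts in Hw.
  apply (seg_phi_le _ _ _ _ _ _ Hw).
  - apply HE; auto.
  - apply HE. apply nxt_lt. lia.
Qed.

Lemma line_cont (x0 y0 A B : R) : cont01 (fun t => (x0 + t * A, y0 + t * B)).
Proof.
  intros t Ht eps He. exists (eps / (Rabs A + Rabs B + 1)). split.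
  - apply Rdiv_lt_0_compat; [lra|]. pose proof (Rabs_pos A); pose proof (Rabs_pos B); lra.
  - intros s Hs Hst. unfold dinf, px, py; simpl.
    assert (HA : Rabs (x0 + t * A - (x0 + s * A)) = Rabs (s - t) * Rabs A).
    { rewrite <- Rabs_mult, Rabs_minus_sym. f_equal. ring. }
    assert (HB : Rabs (y0 + t * B - (y0 + s * B)) = Rabs (s - t) * Rabs B).
    { rewrite <- Rabs_mult, Rabs_minus_sym. f_equal. ring. }
    rewrite HA, HB. pose proof (Rabs_pos A); pose proof (Rabs_pos B).
    pose proof (Rabs_pos (s - t)).
    assert (Hk : Rabs (s - t) * (Rabs A + Rabs B + 1) < eps).
    { apply Rmult_lt_reg_r with (/ (Rabs A + Rabs B + 1)).
      - apply Rinv_0_lt_compat; lra.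
      - rewrite Rmult_assoc, Rinv_r by lra. rewrite Rmult_1_r. exact Hst. }
    apply Rmax_lub_lt; nra.
Qed.

Lemma escape V al be p : axis al be -> region V p -> ~ on_boundary V p ->
  (forall w, on_boundary V w -> phi al be w <= phi al be p) -> False.
Proof.
  intros Hax [Hb|[Hnb [M HM]]] Hnb' Hw; [contradiction|].
  set (K := Rabs M + Rabs (px p) + Rabs (py p) + 1).
  assert (HK : K > 0) by (unfold K; pose proof (Rabs_pos M); pose proof (Rabs_pos (px p)); pose proof (Rabs_pos (py p)); lra).
  set (g := fun t => (px p + t * (K * al), py p + t * (K * be))).
  assert (Hr : reach_off V p (g 1)).
  { exists g. split; [apply line_cont|]. split.
    - unfold g. rewrite (pt_eta p) at 3. f_equal; ring.
    - split; [reflexivity|]. intros t Ht Hbt.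
      destruct (Req_dec t 0) as [E|E].
      + subst t. apply Hnb. replace p with (g 0); auto. unfold g. rewrite (pt_eta p) at 3. f_equal; ring.
      + specialize (Hw _ Hbt). unfold phi, g, px, py in Hw. simpl in Hw. fold (px p) (py p) in Hw.
        unfold phi in Hw.
        destruct Hax as [[-> [-> | ->]]|[-> [-> | ->]]]; nra. }
  destruct (HM _ Hr) as [H1 H2]. unfold g, px, py in H1, H2; simpl in H1, H2.
  fold (px p) (py p) in H1, H2. unfold K in *.
  destruct Hax as [[-> [-> | ->]]|[-> [-> | ->]]]; rabs.
Qed.

Lemma region_le V al be i w : axis al be -> ext_edge V al be i -> region V w ->
  phi al be w <= phi al be (vtx V i).
Proof.
  intros Hax He Hr. destruct (classic (on_boundary V w)) as [Hb|Hb].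
  - eapply bnd_le; eauto.
  - destruct (Rle_dec (phi al be w) (phi al be (vtx V i))) as [|Hn]; auto.
    exfalso. apply (escape V al be w Hax Hr Hb). intros u Hu.
    pose proof (bnd_le _ _ _ _ _ He Hu). lra.
Qed.

Lemma seg_congr a b v w : px w = px v -> py w = py v -> seg a b v -> seg a b w.
Proof. intros E1 E2 [t [Ht [Hx Hy]]]. exists t. rewrite E1, E2. auto. Qed.

Lemma axis_eq_coll al be a b c : axis al be -> phi al be a = phi al be b ->
  phi al be a = phi al be c -> collinear a b c.
Proof.
  intros Hax E1 E2. unfold collinear. unfold phi in *.
  destruct Hax as [[-> [-> | ->]]|[-> [-> | ->]]].
  - assert (py b = py a) by lra. assert (py c = py a) by lra. rewrite H, H0. ring.
  - assert (py b = py a) by lra. assert (py c = py a) by lra. rewrite H, H0. ring.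
  - assert (px b = px a) by lra. assert (px c = px a) by lra. rewrite H, H0. ring.
  - assert (px b = px a) by lra. assert (px c = px a) by lra. rewrite H, H0. ring.
Qed.

Lemma ext_vertex V al be i k : obstacle V -> axis al be -> ext_edge V al be i ->
  (k < nv V)%nat -> phi al be (vtx V k) >= phi al be (vtx V i) ->
  seg (vtx V i) (vtx V (nxt V i)) (vtx V k).
Proof.
  intros [[H3 [Hnd Hs]] Hgp] Hax [Hi HE] Hk Hge.
  assert (Hn : (nxt V i < nv V)%nat) by (apply nxt_lt; lia).
  destruct (Nat.eq_dec k i) as [->|Nki]; [apply seg_l|].
  destruct (Nat.eq_dec k (nxt V i)) as [->|Nkn]; [apply seg_r|].
  exfalso. apply (Hgp i (nxt V i) k Hi Hn Hk).
  - intro E. apply (nxt_neq V i); auto.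
  - auto.
  - auto.
  - destruct (HE i Hi). destruct (HE (nxt V i) Hn). destruct (HE k Hk).
    apply axis_eq_coll with al be; auto; lra.
Qed.

Lemma bnd_on_edge V al be i w : obstacle V -> axis al be -> ext_edge V al be i ->
  on_boundary V w -> phi al be w >= phi al be (vtx V i) -> edge_pts V i w.
Proof.
  intros Hob Hax He [j [Hj Hw]] Hge. unfold edge_pts in *.
  destruct He as [Hi HE].
  assert (H3 : (3 <= nv V)%nat) by (destruct Hob as [[H3 _] _]; auto).
  assert (Hnj : (nxt V j < nv V)%nat) by (apply nxt_lt; lia).
  destruct (HE j Hj) as [Hu _]. destruct (HE (nxt V j) Hnj) as [Hv _].
  destruct (seg_phi al be _ _ _ Hw) as [t [Ht Et]].
  destruct (Req_dec t 1) as [T1|T1].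
  - subst t. assert (Hv' : phi al be (vtx V (nxt V j)) >= phi al be (vtx V i)) by lra.
    pose proof (ext_vertex V al be i _ Hob Hax (conj Hi HE) Hnj Hv').
    destruct Hw as [s [Hs [Hx Hy]]].
    destruct (Req_dec s 1) as [S1|S1].
    + subst s. apply seg_congr with (vtx V (nxt V j)); auto; [rewrite Hx|rewrite Hy]; ring.
    +
      assert (Hu' : phi al be (vtx V j) >= phi al be (vtx V i)).
      { unfold phi in *. rewrite Hx, Hy in Et. 
        assert (phi al be (vtx V j) = phi al be (vtx V (nxt V j))) by (unfold phi; nra). unfold phi in *. lra. }
      pose proof (ext_vertex V al be i _ Hob Hax (conj Hi HE) Hj Hu').
      apply (seg_sub _ _ _ _ H0 H). exists s. auto.
  - assert (Hu' : phi al be (vtx V j) >= phi al be (vtx V i)) by nra.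
    pose proof (ext_vertex V al be i _ Hob Hax (conj Hi HE) Hj Hu').
    destruct (Req_dec t 0) as [T0|T0].
    + destruct Hw as [s [Hs [Hx Hy]]].
      destruct (Req_dec s 0) as [S0|S0].
      * subst s. apply seg_congr with (vtx V j); auto; [rewrite Hx|rewrite Hy]; ring.
      * assert (Hv' : phi al be (vtx V (nxt V j)) >= phi al be (vtx V i)).
        { unfold phi in *. rewrite Hx, Hy in Et. nra. }
        pose proof (ext_vertex V al be i _ Hob Hax (conj Hi HE) Hnj Hv').
        apply (seg_sub _ _ _ _ H H0). exists s. auto.
    + assert (Hv' : phi al be (vtx V (nxt V j)) >= phi al be (vtx V i)) by nra.
      pose proof (ext_vertex V al be i _ Hob Hax (conj Hi HE) Hnj Hv').
      apply (seg_sub _ _ _ _ H H0). auto.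
Qed.

Lemma region_on_edge V al be i w : obstacle V -> axis al be -> ext_edge V al be i ->
  region V w -> phi al be w >= phi al be (vtx V i) -> edge_pts V i w.
Proof.
  intros Hob Hax He Hr Hge. destruct (classic (on_boundary V w)) as [Hb|Hb].
  - eapply bnd_on_edge; eauto.
  - exfalso. apply (escape V al be w Hax Hr Hb). intros u Hu.
    pose proof (bnd_le _ _ _ _ _ He Hu). lra.
Qed.

Lemma edge_bnd V i w : (i < nv V)%nat -> edge_pts V i w -> on_boundary V w.
Proof. intros Hi H. exists i. auto. Qed.

Lemma edge_region V i w : (i < nv V)%nat -> edge_pts V i w -> region V w.
Proof. intros Hi H. left. exists i. auto. Qed.

Lemma last_cons_d (b : pt) l d d' : last (b :: l) d = last (b :: l) d'.
Proof.
  revert b. induction l as [|c l IH]; intros b; simpl; auto.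
  destruct l; auto. apply (IH c).
Qed.

Lemma l1_tri a b c : l1 a c <= l1 a b + l1 b c.
Proof. unfold l1. rabs. Qed.

Lemma rpath_len_ge a l : rpath_len a l >= l1 a (last (a :: l) a).
Proof.
  revert a. induction l as [|b l IH]; intros a.
  - simpl. unfold l1. replace (px a - px a) with 0 by ring. replace (py a - py a) with 0 by ring.
    rewrite Rabs_R0. lra.
  - specialize (IH b).
    assert (E : last (a :: b :: l) a = last (b :: l) b).
    { change (last (b :: l) a = last (b :: l) b). apply last_cons_d. }
    rewrite E. change (rpath_len a (b :: l)) with (l1 a b + rpath_len b l).
    pose proof (l1_tri a b (last (b :: l) b)). lra.
Qed.

Lemma btw_trans_l a b c x : btw a c b -> btw b c x -> btw a c x.
Proof. unfold btw. lra. Qed.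
Lemma btw_trans_r a b c x : btw a c b -> btw a b x -> btw a c x.
Proof. unfold btw. lra. Qed.

Lemma abs_eq_btw a b c : Rabs (b - a) + Rabs (c - b) = Rabs (c - a) -> btw a c b.
Proof. unfold btw. rabs. Qed.

Lemma rpath_step a b v : l1 a b + l1 b v = l1 a v ->
  btw (px a) (px v) (px b) /\ btw (py a) (py v) (py b).
Proof.
  unfold l1. intros H.
  assert (Hx : Rabs (px b - px a) + Rabs (px v - px b) = Rabs (px v - px a)).
  { pose proof (Rabs_triang (px b - px a) (px v - px b)).
    pose proof (Rabs_triang (py b - py a) (py v - py b)).
    replace (px b - px a + (px v - px b)) with (px v - px a) in * by ring.
    replace (py b - py a + (py v - py b)) with (py v - py a) in * by ring. lra. }
  assert (Hy : Rabs (py b - py a) + Rabs (py v - py b) = Rabs (py v - py a)) by lra.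
  split; apply abs_eq_btw; auto.
Qed.

Lemma rpath_cross_y (A : pt -> Prop) a l v : rpath_in A a l -> last (a :: l) a = v ->
  rpath_len a l = l1 a v -> A a ->
  forall y, btw (py a) (py v) y -> exists x, btw (px a) (px v) x /\ A (x, y).
Proof.
  revert a. induction l as [|b l IH]; intros a Hp Hl Hlen Ha y Hy.
  - simpl in Hl. subst v. exists (px a). split; [left; lra|].
    assert (y = py a) by (destruct Hy; lra). subst y. rewrite <- pt_eta. auto.
  - destruct Hp as [Hal [Hs Hp]].
    assert (Hl' : last (b :: l) b = v).
    { rewrite <- Hl. change (last (b :: l) b = last (b :: l) a). apply last_cons_d. }
    change (rpath_len a (b :: l)) with (l1 a b + rpath_len b l) in Hlen. pose proof (rpath_len_ge b l). rewrite Hl' in H.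
    pose proof (l1_tri a b v).
    assert (Hlen' : rpath_len b l = l1 b v) by lra.
    assert (Hst : l1 a b + l1 b v = l1 a v) by lra.
    destruct (rpath_step _ _ _ Hst) as [Bx By].
    assert (Hb : A b) by (apply Hs, seg_r).
    destruct (classic (btw (py a) (py b) y)) as [Y1|Y1].
    + destruct Hal as [E|E].
      * exists (px a). split; [unfold btw; lra|]. apply Hs.
        apply (proj2 (seg_col a b (px a, y) E)). simpl. auto.
      * exists (px a). split; [unfold btw; lra|].
        assert (y = py a) by (unfold btw in Y1; lra). subst y. rewrite <- pt_eta. auto.
    + assert (Y2 : btw (py b) (py v) y) by (unfold btw in *; lra).
      destruct (IH b Hp Hl' Hlen' Hb y Y2) as [x [Hx HA]].
      exists x. split; auto. unfold btw in *; lra.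
Qed.

Lemma rpath_cross_x (A : pt -> Prop) a l v : rpath_in A a l -> last (a :: l) a = v ->
  rpath_len a l = l1 a v -> A a ->
  forall x, btw (px a) (px v) x -> exists y, btw (py a) (py v) y /\ A (x, y).
Proof.
  revert a. induction l as [|b l IH]; intros a Hp Hl Hlen Ha x Hx.
  - simpl in Hl. subst v. exists (py a). split; [left; lra|].
    assert (x = px a) by (destruct Hx; lra). subst x. rewrite <- pt_eta. auto.
  - destruct Hp as [Hal [Hs Hp]].
    assert (Hl' : last (b :: l) b = v).
    { rewrite <- Hl. change (last (b :: l) b = last (b :: l) a). apply last_cons_d. }
    change (rpath_len a (b :: l)) with (l1 a b + rpath_len b l) in Hlen. pose proof (rpath_len_ge b l). rewrite Hl' in H.
    pose proof (l1_tri a b v).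
    assert (Hlen' : rpath_len b l = l1 b v) by lra.
    assert (Hst : l1 a b + l1 b v = l1 a v) by lra.
    destruct (rpath_step _ _ _ Hst) as [Bx By].
    assert (Hb : A b) by (apply Hs, seg_r).
    destruct (classic (btw (px a) (px b) x)) as [X1|X1].
    + destruct Hal as [E|E].
      * exists (py a). split; [unfold btw; lra|].
        assert (x = px a) by (unfold btw in X1; lra). subst x. rewrite <- pt_eta. auto.
      * exists (py a). split; [unfold btw; lra|]. apply Hs.
        apply (proj2 (seg_row a b (x, py a) E)). simpl. auto.
    + assert (X2 : btw (px b) (px v) x) by (unfold btw in *; lra).
      destruct (IH b Hp Hl' Hlen' Hb x X2) as [y [Hy HA]].
      exists y. split; auto. unfold btw in *; lra.
Qed.

Lemma cross_y V u v : rect_convex V -> region V u -> region V v ->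
  forall y, btw (py u) (py v) y -> exists x, btw (px u) (px v) x /\ region V (x, y).
Proof.
  intros Hc Hu Hv. destruct (Hc u v Hu Hv) as [l [Hp [Hl Hlen]]].
  apply (rpath_cross_y _ u l v); auto.
Qed.

Lemma cross_x V u v : rect_convex V -> region V u -> region V v ->
  forall x, btw (px u) (px v) x -> exists y, btw (py u) (py v) y /\ region V (x, y).
Proof.
  intros Hc Hu Hv. destruct (Hc u v Hu Hv) as [l [Hp [Hl Hlen]]].
  apply (rpath_cross_x _ u l v); auto.
Qed.

Lemma conv_col V u v : rect_convex V -> region V u -> region V v -> px u = px v ->
  forall y, btw (py u) (py v) y -> region V (px u, y).
Proof.
  intros Hc Hu Hv E y Hy. destruct (cross_y V u v Hc Hu Hv y Hy) as [x [Hx Hr]].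
  replace (px u) with x; auto. rewrite <- E in Hx. unfold btw in Hx. lra.
Qed.

Lemma conv_row V u v : rect_convex V -> region V u -> region V v -> py u = py v ->
  forall x, btw (px u) (px v) x -> region V (x, py u).
Proof.
  intros Hc Hu Hv E x Hx. destruct (cross_x V u v Hc Hu Hv x Hx) as [y [Hy Hr]].
  replace (py u) with y; auto. rewrite <- E in Hy. unfold btw in Hy. lra.
Qed.

Lemma conv_col_seg V u v : rect_convex V -> region V u -> region V v -> px u = px v ->
  subset (seg u v) (region V).
Proof.
  intros Hc Hu Hv E w Hw. apply seg_col in Hw; auto. destruct Hw as [Hx Hy].
  rewrite (pt_eta w), Hx. apply conv_col with v; auto.
Qed.

Lemma conv_row_seg V u v : rect_convex V -> region V u -> region V v -> py u = py v ->
  subset (seg u v) (region V).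
Proof.
  intros Hc Hu Hv E w Hw. apply seg_row in Hw; auto. destruct Hw as [Hy Hx].
  rewrite (pt_eta w), Hy. apply conv_row with v; auto.
Qed.


Definition IntC (Rg : R -> R -> Prop) (x y : R) : Prop :=
  exists e, 0 < e /\ forall dx dy, Rabs dx < e -> Rabs dy < e -> Rg (x + dx) (y + dy).

Lemma IntC_Rg Rg x y : IntC Rg x y -> Rg x y.
Proof.
  intros [e [He H]]. specialize (H 0 0). rewrite !Rplus_0_r in H. apply H; rewrite Rabs_R0; lra.
Qed.

Lemma L1 (G I : R -> Prop) (t xz xe xm : R) :
  (forall x, I x -> G x) -> I xz -> ~ I xe -> btw xe xm xz ->
  (forall x, btw xz t x -> G x) ->
  (forall x, btw xz t x -> x <> t -> I x) ->
  ~ (btw xe xm t /\ G t) ->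
  ((xz < t -> xe < xz /\ xz <= xm < t) /\ (t < xz -> xz < xe /\ t < xm <= xz)) /\ I xm.
Proof.
  intros IG Iz Ne Bz SG SI NH.
  assert (Gt : G t) by (apply SG; unfold btw; lra).
  assert (Ht : ~ btw xe xm t) by (intro; apply NH; auto).
  assert (Nzt : xz <> t) by (intro; subst; apply Ht; auto).
  assert (Nez : xe <> xz) by (intro; subst; contradiction).
  unfold btw in *.
  destruct (Rlt_or_le xz t) as [C|C].
  - assert (xe < xz).
    { destruct (Rlt_or_le xe xz) as [|C2]; auto. exfalso.
      destruct (Rlt_or_le xe t) as [C3|C3].
      + apply Ne, SI; lra.
      + apply Ht. lra. }
    assert (xz <= xm < t).
    { split; [lra|]. destruct (Rlt_or_le xm t); auto. exfalso. apply Ht. lra. }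
    split; [split; intros; lra|]. destruct (Req_dec xm xz) as [->|]; auto. apply SI; lra.
  - assert (t < xz) by lra.
    assert (xz < xe).
    { destruct (Rlt_or_le xz xe) as [|C2]; auto. exfalso.
      destruct (Rlt_or_le t xe) as [C3|C3].
      + apply Ne, SI; lra.
      + apply Ht. lra. }
    assert (t < xm <= xz).
    { split; [|lra]. destruct (Rlt_or_le t xm); auto. exfalso. apply Ht. lra. }
    split; [split; intros; lra|]. destruct (Req_dec xm xz) as [->|]; auto. apply SI; lra.
Qed.

Section Core.
Variable Rg : R -> R -> Prop.
Variables X1 X2 Y1 Y2 : R.
Hypothesis HX : X1 < X2.
Hypothesis HY : Y1 < Y2.
Hypothesis SH1 : forall x y x', Rg x y -> Y1 <= y -> btw x X1 x' -> Rg x' y.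
Hypothesis SH2 : forall x y x', Rg x y -> y <= Y2 -> btw x X2 x' -> Rg x' y.
Hypothesis SV1 : forall x y y', Rg x y -> x <= X2 -> btw y Y1 y' -> Rg x y'.
Hypothesis SV2 : forall x y y', Rg x y -> X1 <= x -> btw y Y2 y' -> Rg x y'.

Lemma btw_shift a b x d : btw a b x -> Rabs d < Rabs (x - b) -> btw (a + d) b (x + d).
Proof. unfold btw. rabs. Qed.

Lemma IH1 x y x' : IntC Rg x y -> Y1 < y -> btw x X1 x' -> x' <> X1 -> IntC Rg x' y.
Proof.
  intros [e [He H]] Hy Hb Hn.
  exists (Rmin e (Rmin (y - Y1) (Rabs (x' - X1)))). split.
  - assert (0 < Rabs (x' - X1)) by (apply Rabs_pos_lt; lra).
    repeat apply Rmin_glb_lt; lra.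
  - intros dx dy Hdx Hdy.
    pose proof (Rmin_l e (Rmin (y - Y1) (Rabs (x' - X1)))).
    pose proof (Rmin_r e (Rmin (y - Y1) (Rabs (x' - X1)))).
    pose proof (Rmin_l (y - Y1) (Rabs (x' - X1))).
    pose proof (Rmin_r (y - Y1) (Rabs (x' - X1))).
    apply SH1 with (x + dx).
    + apply H; lra.
    + rabs.
    + replace (x' + dx) with (x' + dx) by ring.
      assert (btw (x + dx) (X1 + 0) (x' + dx)).
      { unfold btw in *. rabs. }
      rewrite Rplus_0_r in H4. auto.
Qed.

Lemma IH2 x y x' : IntC Rg x y -> y < Y2 -> btw x X2 x' -> x' <> X2 -> IntC Rg x' y.
Proof.
  intros [e [He H]] Hy Hb Hn.
  exists (Rmin e (Rmin (Y2 - y) (Rabs (x' - X2)))). split.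
  - assert (0 < Rabs (x' - X2)) by (apply Rabs_pos_lt; lra).
    repeat apply Rmin_glb_lt; lra.
  - intros dx dy Hdx Hdy.
    pose proof (Rmin_l e (Rmin (Y2 - y) (Rabs (x' - X2)))).
    pose proof (Rmin_r e (Rmin (Y2 - y) (Rabs (x' - X2)))).
    pose proof (Rmin_l (Y2 - y) (Rabs (x' - X2))).
    pose proof (Rmin_r (Y2 - y) (Rabs (x' - X2))).
    apply SH2 with (x + dx).
    + apply H; lra.
    + rabs.
    + unfold btw in *. rabs.
Qed.

Lemma IV1 x y y' : IntC Rg x y -> x < X2 -> btw y Y1 y' -> y' <> Y1 -> IntC Rg x y'.
Proof.
  intros [e [He H]] Hx Hb Hn.
  exists (Rmin e (Rmin (X2 - x) (Rabs (y' - Y1)))). split.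
  - assert (0 < Rabs (y' - Y1)) by (apply Rabs_pos_lt; lra).
    repeat apply Rmin_glb_lt; lra.
  - intros dx dy Hdx Hdy.
    pose proof (Rmin_l e (Rmin (X2 - x) (Rabs (y' - Y1)))).
    pose proof (Rmin_r e (Rmin (X2 - x) (Rabs (y' - Y1)))).
    pose proof (Rmin_l (X2 - x) (Rabs (y' - Y1))).
    pose proof (Rmin_r (X2 - x) (Rabs (y' - Y1))).
    apply SV1 with (y + dy).
    + apply H; lra.
    + rabs.
    + unfold btw in *. rabs.
Qed.

Lemma IV2 x y y' : IntC Rg x y -> X1 < x -> btw y Y2 y' -> y' <> Y2 -> IntC Rg x y'.
Proof.
  intros [e [He H]] Hx Hb Hn.
  exists (Rmin e (Rmin (x - X1) (Rabs (y' - Y2)))). split.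
  - assert (0 < Rabs (y' - Y2)) by (apply Rabs_pos_lt; lra).
    repeat apply Rmin_glb_lt; lra.
  - intros dx dy Hdx Hdy.
    pose proof (Rmin_l e (Rmin (x - X1) (Rabs (y' - Y2)))).
    pose proof (Rmin_r e (Rmin (x - X1) (Rabs (y' - Y2)))).
    pose proof (Rmin_l (x - X1) (Rabs (y' - Y2))).
    pose proof (Rmin_r (x - X1) (Rabs (y' - Y2))).
    apply SV2 with (y + dy).
    + apply H; lra.
    + rabs.
    + unfold btw in *. rabs.
Qed.


Definition onP (a1 b1 a2 b2 x y : R) : Prop := (y = b1 /\ btw a1 a2 x) \/ (x = a2 /\ btw b1 b2 y).
Definition onP' (a1 b1 a2 b2 x y : R) : Prop := (x = a1 /\ btw b1 b2 y) \/ (y = b2 /\ btw a1 a2 x).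

Ltac tb := first [ solve [left; lra] | solve [right; lra] ].
Ltac tn := let E := fresh in intro E; lra.
Ltac try_int H :=
  first [ apply (IV1 _ _ _ H); [lra | tb | tn]
        | apply (IV2 _ _ _ H); [lra | tb | tn]
        | apply (IH1 _ _ _ H); [lra | tb | tn]
        | apply (IH2 _ _ _ H); [lra | tb | tn] ].
Ltac spec_all :=
  repeat match goal with
  | H : ?u < ?v -> _ |- _ =>
      first [ let h := fresh in assert (h : u < v) by lra; specialize (H h) | clear H ]
  | H : _ /\ _ |- _ => destruct H
  end.
Ltac split3 u A B := destruct (Rlt_or_le u A); [|destruct (Rlt_or_le u B)].

Theorem core a1 b1 a2 b2 : ~ IntC Rg a1 b1 -> ~ IntC Rg a2 b2 ->
  (exists x y, onP a1 b1 a2 b2 x y /\ IntC Rg x y) ->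
  (exists x y, onP' a1 b1 a2 b2 x y /\ IntC Rg x y) ->
  exists x y, onP a1 b1 a2 b2 x y /\ Rg x y /\ (x = X1 \/ x = X2 \/ y = Y1 \/ y = Y2).
Proof.
  intros Np Nq [xz [yz [Hz Iz]]] [x' [y' [Hz' Iz']]].
  apply NNPP; intro NH0.
  assert (NH : forall x y, onP a1 b1 a2 b2 x y -> Rg x y -> x <> X1 /\ x <> X2 /\ y <> Y1 /\ y <> Y2).
  { intros x y Ho Hr. repeat split; intro E; apply NH0; exists x, y; auto 6. }
  assert (NHf : forall x y, onP a1 b1 a2 b2 x y -> Rg x y -> x = X1 \/ x = X2 \/ y = Y1 \/ y = Y2 -> False).
  { intros x y Ho Hr HH. apply NH0; exists x, y; auto. }
  clear NH0.
  assert (Ba2 : btw a1 a2 a2) by (unfold btw; lra).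
  assert (Bb1 : btw b1 b2 b1) by (unfold btw; lra).
  destruct Hz as [[-> Bz]|[-> Bz]].
  -
    pose proof (IntC_Rg _ _ _ Iz) as Rz.
    destruct (NH xz b1 (or_introl (conj eq_refl Bz)) Rz) as (n1&n2&n3&n4).
    assert (FA1 : Y1 < b1 -> ((xz < X1 -> a1 < xz /\ xz <= a2 < X1) /\ (X1 < xz -> xz < a1 /\ X1 < a2 <= xz)) /\ IntC Rg a2 b1).
    { intro Hy. apply (L1 (fun x => Rg x b1) (fun x => IntC Rg x b1)).
      - intros; apply IntC_Rg; auto.
      - auto. - auto. - auto.
      - intros x Hx. apply SH1 with xz; auto; lra.
      - intros x Hx Hn. apply IH1 with xz; auto.
      - intros [Hb Hr]. apply (NHf X1 b1); [left; auto | auto | left; reflexivity]. }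
    assert (FA2 : b1 < Y2 -> ((xz < X2 -> a1 < xz /\ xz <= a2 < X2) /\ (X2 < xz -> xz < a1 /\ X2 < a2 <= xz)) /\ IntC Rg a2 b1).
    { intro Hy. apply (L1 (fun x => Rg x b1) (fun x => IntC Rg x b1)).
      - intros; apply IntC_Rg; auto.
      - auto. - auto. - auto.
      - intros x Hx. apply SH2 with xz; auto; lra.
      - intros x Hx Hn. apply IH2 with xz; auto.
      - intros [Hb Hr]. apply (NHf X2 b1); [left; auto | auto | right; left; reflexivity]. }
    assert (Ic : IntC Rg a2 b1) by (destruct (Rlt_or_le Y1 b1); [apply FA1|apply FA2]; lra).
    pose proof (IntC_Rg _ _ _ Ic) as Rc.
    destruct (NH a2 b1 (or_introl (conj eq_refl Ba2)) Rc) as (m1&m2&_&_).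
    assert (FC1 : a2 < X2 -> ((b1 < Y1 -> b2 < b1 /\ b1 <= b1 < Y1) /\ (Y1 < b1 -> b1 < b2 /\ Y1 < b1 <= b1)) /\ IntC Rg a2 b1).
    { intro Hx. apply (L1 (fun y => Rg a2 y) (fun y => IntC Rg a2 y)).
      - intros; apply IntC_Rg; auto.
      - auto. - auto. - unfold btw; lra.
      - intros y Hy. apply SV1 with b1; auto; lra.
      - intros y Hy Hn. apply IV1 with b1; auto.
      - intros [Hb Hr]. apply (NHf a2 Y1); [right; split; auto; unfold btw in *; lra | auto | right; right; left; reflexivity]. }
    assert (FC2 : X1 < a2 -> ((b1 < Y2 -> b2 < b1 /\ b1 <= b1 < Y2) /\ (Y2 < b1 -> b1 < b2 /\ Y2 < b1 <= b1)) /\ IntC Rg a2 b1).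
    { intro Hx. apply (L1 (fun y => Rg a2 y) (fun y => IntC Rg a2 y)).
      - intros; apply IntC_Rg; auto.
      - auto. - auto. - unfold btw; lra.
      - intros y Hy. apply SV2 with b1; auto; lra.
      - intros y Hy Hn. apply IV2 with b1; auto.
      - intros [Hb Hr]. apply (NHf a2 Y2); [right; split; auto; unfold btw in *; lra | auto | right; right; right; reflexivity]. }
    clear NH NHf Rz Rc Ba2 Bb1.
    destruct Hz' as [[-> By]|[-> Bx]].
    + unfold btw in Bz, By.
      split3 b1 Y1 Y2; split3 xz X1 X2; split3 a2 X1 X2; destruct Bz; destruct By; spec_all;
      try lra; apply Np; try_int Iz'.
    + unfold btw in Bz, Bx.
      split3 b1 Y1 Y2; split3 xz X1 X2; split3 a2 X1 X2; destruct Bz; destruct Bx; spec_all;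
      try lra; apply Nq; try_int Iz'.
  -
    pose proof (IntC_Rg _ _ _ Iz) as Rz.
    destruct (NH a2 yz (or_intror (conj eq_refl Bz)) Rz) as (n1&n2&n3&n4).
    assert (FB1 : a2 < X2 -> ((yz < Y1 -> b2 < yz /\ yz <= b1 < Y1) /\ (Y1 < yz -> yz < b2 /\ Y1 < b1 <= yz)) /\ IntC Rg a2 b1).
    { intro Hx. apply (L1 (fun y => Rg a2 y) (fun y => IntC Rg a2 y)).
      - intros; apply IntC_Rg; auto.
      - auto. - auto. - unfold btw in *; lra.
      - intros y Hy. apply SV1 with yz; auto; lra.
      - intros y Hy Hn. apply IV1 with yz; auto.
      - intros [Hb Hr]. apply (NHf a2 Y1); [right; split; auto; unfold btw in *; lra | auto | right; right; left; reflexivity]. }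
    assert (FB2 : X1 < a2 -> ((yz < Y2 -> b2 < yz /\ yz <= b1 < Y2) /\ (Y2 < yz -> yz < b2 /\ Y2 < b1 <= yz)) /\ IntC Rg a2 b1).
    { intro Hx. apply (L1 (fun y => Rg a2 y) (fun y => IntC Rg a2 y)).
      - intros; apply IntC_Rg; auto.
      - auto. - auto. - unfold btw in *; lra.
      - intros y Hy. apply SV2 with yz; auto; lra.
      - intros y Hy Hn. apply IV2 with yz; auto.
      - intros [Hb Hr]. apply (NHf a2 Y2); [right; split; auto; unfold btw in *; lra | auto | right; right; right; reflexivity]. }
    assert (Ic : IntC Rg a2 b1) by (destruct (Rlt_or_le a2 X2); [apply FB1|apply FB2]; lra).
    pose proof (IntC_Rg _ _ _ Ic) as Rc.
    destruct (NH a2 b1 (or_introl (conj eq_refl Ba2)) Rc) as (_&_&m3&m4).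
    assert (FR1 : Y1 < b1 -> ((a2 < X1 -> a1 < a2 /\ a2 <= a2 < X1) /\ (X1 < a2 -> a2 < a1 /\ X1 < a2 <= a2)) /\ IntC Rg a2 b1).
    { intro Hy. apply (L1 (fun x => Rg x b1) (fun x => IntC Rg x b1)).
      - intros; apply IntC_Rg; auto.
      - auto. - auto. - unfold btw; lra.
      - intros x Hx. apply SH1 with a2; auto; lra.
      - intros x Hx Hn. apply IH1 with a2; auto.
      - intros [Hb Hr]. apply (NHf X1 b1); [left; auto | auto | left; reflexivity]. }
    assert (FR2 : b1 < Y2 -> ((a2 < X2 -> a1 < a2 /\ a2 <= a2 < X2) /\ (X2 < a2 -> a2 < a1 /\ X2 < a2 <= a2)) /\ IntC Rg a2 b1).
    { intro Hy. apply (L1 (fun x => Rg x b1) (fun x => IntC Rg x b1)).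
      - intros; apply IntC_Rg; auto.
      - auto. - auto. - unfold btw; lra.
      - intros x Hx. apply SH2 with a2; auto; lra.
      - intros x Hx Hn. apply IH2 with a2; auto.
      - intros [Hb Hr]. apply (NHf X2 b1); [left; auto | auto | right; left; reflexivity]. }
    clear NH NHf Rz Rc Ba2 Bb1.
    destruct Hz' as [[-> By]|[-> Bx]].
    + unfold btw in Bz, By.
      split3 b1 Y1 Y2; split3 yz Y1 Y2; split3 a2 X1 X2; destruct Bz; destruct By; spec_all;
      try lra; apply Np; try_int Iz'.
    + unfold btw in Bz, Bx.
      split3 b1 Y1 Y2; split3 yz Y1 Y2; split3 a2 X1 X2; destruct Bz; destruct Bx; spec_all;
      try lra; apply Nq; try_int Iz'.
Qed.

End Core.

Definition Rgn (V : list pt) (x y : R) : Prop := region V (x, y).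

Lemma interior_IntC V w : interior (region V) w <-> IntC (Rgn V) (px w) (py w).
Proof.
  split.
  - intros [e [He H]]. exists e. split; auto. intros dx dy Hx Hy. apply H.
    unfold dinf, px, py; simpl. fold (px w) (py w).
    replace (px w + dx - px w) with dx by ring. replace (py w + dy - py w) with dy by ring.
    apply Rmax_lub_lt; auto.
  - intros [e [He H]]. exists e. split; auto. intros q Hq. unfold dinf in Hq.
    pose proof (Rmax_l (Rabs (px q - px w)) (Rabs (py q - py w))).
    pose proof (Rmax_r (Rabs (px q - px w)) (Rabs (py q - py w))).
    specialize (H (px q - px w) (py q - py w) ltac:(lra) ltac:(lra)).
    unfold Rgn in H. replace (px w + (px q - px w)) with (px q) in H by ring.
    replace (py w + (py q - py w)) with (py q) in H by ring. rewrite <- pt_eta in H. auto.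
Qed.

Lemma btw_sym a b x : btw a b x -> btw b a x.
Proof. unfold btw; lra. Qed.

Lemma Lpath_true p q w : Lpath p q true w <-> onP (px p) (py p) (px q) (py q) (px w) (py w).
Proof.
  unfold Lpath, onP. simpl. split.
  - intros [H|H].
    + left. apply seg_row in H; [|reflexivity]. simpl in H. auto.
    + right. apply seg_col in H; [|reflexivity]. simpl in H. auto.
  - intros [H|H].
    + left. apply seg_row; [reflexivity|]. simpl. auto.
    + right. apply seg_col; [reflexivity|]. simpl. auto.
Qed.

Lemma Lpath_false p q w : Lpath p q false w <-> onP' (px p) (py p) (px q) (py q) (px w) (py w).
Proof.
  unfold Lpath, onP'. simpl. split.
  - intros [H|H].
    + left. apply seg_col in H; [|reflexivity]. simpl in H. auto.
    + right. apply seg_row in H; [|reflexivity]. simpl in H. auto.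
  - intros [H|H].
    + left. apply seg_col; [reflexivity|]. simpl. auto.
    + right. apply seg_row; [reflexivity|]. simpl. auto.
Qed.

Lemma Lpath_swap p q w : Lpath p q false w <-> Lpath q p true w.
Proof.
  rewrite Lpath_false, Lpath_true. unfold onP, onP'.
  split; intros [[E B]|[E B]]; [right|left|right|left]; split; auto; apply btw_sym; auto.
Qed.

Lemma vtx_inj V i j : NoDup V -> (i < nv V)%nat -> (j < nv V)%nat -> i <> j -> vtx V i <> vtx V j.
Proof.
  intros Hnd Hi Hj Hij E. apply Hij. unfold vtx in E.
  apply (proj1 (NoDup_nth V (0,0))) with (i := i) (j := j) in Hnd; auto.
Qed.

Lemma pt_neq_x (u v : pt) : u <> v -> py u = py v -> px u <> px v.
Proof. intros N E E2. apply N. rewrite (pt_eta u), (pt_eta v), E, E2. reflexivity. Qed.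
Lemma pt_neq_y (u v : pt) : u <> v -> px u = px v -> py u <> py v.
Proof. intros N E E2. apply N. rewrite (pt_eta u), (pt_eta v), E, E2. reflexivity. Qed.

Lemma max_col V a b : rect_convex V -> visibility_edge (region V) a b -> px a = px b ->
  forall w, region V w -> px w = px a -> seg a b w.
Proof.
  intros Hc [Hab [Hs Hmax]] E w Hw Ew.
  assert (Ra : region V a) by (apply Hs, seg_l).
  assert (Rb : region V b) by (apply Hs, seg_r).
  destruct (classic (btw (py a) (py b) (py w))) as [B|B].
  - apply seg_col; auto.
  - destruct (classic (btw (py a) (py w) (py b))) as [B2|B2].
    + assert (Sub : subset (seg a b) (seg a w)).
      { intros u Hu. apply seg_col in Hu; auto. destruct Hu. apply seg_col; [lra|].
        split; auto. unfold btw in *; lra. }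
      apply (Hmax a w Sub (conv_col_seg V a w Hc Ra Hw ltac:(lra))). apply seg_r.
    + assert (Sub : subset (seg a b) (seg b w)).
      { intros u Hu. apply seg_col in Hu; auto. destruct Hu. apply seg_col; [lra|].
        split; [lra|]. unfold btw in *; lra. }
      apply (Hmax b w Sub (conv_col_seg V b w Hc Rb Hw ltac:(lra))). apply seg_r.
Qed.

Lemma max_row V a b : rect_convex V -> visibility_edge (region V) a b -> py a = py b ->
  forall w, region V w -> py w = py a -> seg a b w.
Proof.
  intros Hc [Hab [Hs Hmax]] E w Hw Ew.
  assert (Ra : region V a) by (apply Hs, seg_l).
  assert (Rb : region V b) by (apply Hs, seg_r).
  destruct (classic (btw (px a) (px b) (px w))) as [B|B].
  - apply seg_row; auto.
  - destruct (classic (btw (px a) (px w) (px b))) as [B2|B2].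
    + assert (Sub : subset (seg a b) (seg a w)).
      { intros u Hu. apply seg_row in Hu; auto. destruct Hu. apply seg_row; [lra|].
        split; auto. unfold btw in *; lra. }
      apply (Hmax a w Sub (conv_row_seg V a w Hc Ra Hw ltac:(lra))). apply seg_r.
    + assert (Sub : subset (seg a b) (seg b w)).
      { intros u Hu. apply seg_row in Hu; auto. destruct Hu. apply seg_row; [lra|].
        split; [lra|]. unfold btw in *; lra. }
      apply (Hmax b w Sub (conv_row_seg V b w Hc Rb Hw ltac:(lra))). apply seg_r.
Qed.

Lemma chord_v V s i : obstacle V -> rect_convex V -> (i < nv V)%nat ->
  py (vtx V i) = py (vtx V (nxt V i)) -> perp_ext_vis_edge V s i ->
  exists e0, edge_pts V i e0 /\ seg_of s e0 /\
    (forall w, region V w -> px w = px e0 -> seg_of s w) /\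
    fst s <> snd s /\ subset (seg_of s) (region V).
Proof.
  intros Hob Hc Hi Ey Hp. destruct s as [a b]. destruct Hp as [Hv [He Hd]].
  destruct Hob as [[H3 [Hnd _]] _].
  assert (Hn : (nxt V i < nv V)%nat) by (apply nxt_lt; lia).
  assert (Nx : px (vtx V i) <> px (vtx V (nxt V i))).
  { apply pt_neq_x; auto. apply vtx_inj; auto. intro E. apply (nxt_neq V i); auto. }
  assert (Eab : px b = px a).
  { rewrite Ey in Hd. replace (py (vtx V (nxt V i)) - py (vtx V (nxt V i))) with 0 in Hd by ring.
    assert ((px b - px a) * (px (vtx V (nxt V i)) - px (vtx V i)) = 0) by lra.
    apply Rmult_integral in H. destruct H; [lra|]. exfalso. apply Nx. lra. }
  unfold seg_of; simpl.
  destruct Hv as [Hab [Hs Hm]].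
  destruct He as [He|He].
  - exists a. split; [exact He|]. split; [apply seg_l|]. split; [|split; auto].
    intros w Hw Ew. apply max_col with V; auto. split; auto.
  - exists b. split; [exact He|]. split; [apply seg_r|]. split; [|split; auto].
    intros w Hw Ew. apply max_col with V; auto. split; auto. lra.
Qed.

Lemma chord_h V s i : obstacle V -> rect_convex V -> (i < nv V)%nat ->
  px (vtx V i) = px (vtx V (nxt V i)) -> perp_ext_vis_edge V s i ->
  exists e0, edge_pts V i e0 /\ seg_of s e0 /\
    (forall w, region V w -> py w = py e0 -> seg_of s w) /\
    fst s <> snd s /\ subset (seg_of s) (region V).
Proof.
  intros Hob Hc Hi Ex Hp. destruct s as [a b]. destruct Hp as [Hv [He Hd]].
  destruct Hob as [[H3 [Hnd _]] _].
  assert (Hn : (nxt V i < nv V)%nat) by (apply nxt_lt; lia).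
  assert (Ny : py (vtx V i) <> py (vtx V (nxt V i))).
  { apply pt_neq_y; auto. apply vtx_inj; auto. intro E. apply (nxt_neq V i); auto. }
  assert (Eab : py b = py a).
  { rewrite Ex in Hd. replace (px (vtx V (nxt V i)) - px (vtx V (nxt V i))) with 0 in Hd by ring.
    assert ((py b - py a) * (py (vtx V (nxt V i)) - py (vtx V i)) = 0) by lra.
    apply Rmult_integral in H. destruct H; [lra|]. exfalso. apply Ny. lra. }
  unfold seg_of; simpl.
  destruct Hv as [Hab [Hs Hm]].
  destruct He as [He|He].
  - exists a. split; [exact He|]. split; [apply seg_l|]. split; [|split; auto].
    intros w Hw Ew. apply max_row with V; auto. split; auto.
  - exists b. split; [exact He|]. split; [apply seg_r|]. split; [|split; auto].
    intros w Hw Ew. apply max_row with V; auto. split; auto. lra.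
Qed.

Ltac solve_btw := unfold btw in *;
  repeat match goal with H : _ \/ _ |- _ => destruct H end;
  first [ lra | solve [left; lra] | solve [right; lra] ].

Lemma IntC_mirror Rg x y : IntC (fun x y => Rg x (- y)) x y <-> IntC Rg x (- y).
Proof.
  split; intros [e [He H]]; exists e; split; auto; intros dx dy Hx Hy.
  - specialize (H dx (- dy) Hx ltac:(rewrite Rabs_Ropp; auto)).
    replace (- y + dy) with (- (y + - dy)) by ring. auto.
  - specialize (H dx (- dy) Hx ltac:(rewrite Rabs_Ropp; auto)).
    replace (- (y + dy)) with (- y + - dy) by ring. auto.
Qed.

Lemma onP_m1 a1 b1 a2 b2 x y : onP a1 b1 a2 b2 x y -> onP a1 (-b1) a2 (-b2) x (-y).
Proof. unfold onP. intros [[E B]|[E B]]; [left|right]; split; try lra; solve_btw. Qed.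
Lemma onP_m2 a1 b1 a2 b2 x y : onP a1 (-b1) a2 (-b2) x y -> onP a1 b1 a2 b2 x (-y).
Proof. unfold onP. intros [[E B]|[E B]]; [left|right]; split; try lra; solve_btw. Qed.
Lemma onP'_m1 a1 b1 a2 b2 x y : onP' a1 b1 a2 b2 x y -> onP' a1 (-b1) a2 (-b2) x (-y).
Proof. unfold onP'. intros [[E B]|[E B]]; [left|right]; split; try lra; solve_btw. Qed.

Lemma fill_row V x1 x2 y x : rect_convex V -> region V (x1, y) -> region V (x2, y) ->
  btw x1 x2 x -> region V (x, y).
Proof. intros Hc H1 H2 B. apply (conv_row V (x1, y) (x2, y) Hc H1 H2 eq_refl x B). Qed.
Lemma fill_col V x y1 y2 y : rect_convex V -> region V (x, y1) -> region V (x, y2) ->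
  btw y1 y2 y -> region V (x, y).
Proof. intros Hc H1 H2 B. apply (conv_col V (x, y1) (x, y2) Hc H1 H2 eq_refl y B). Qed.

Section KT.
Variable V : list pt.
Variables eL eR eB eT : pt.
Variables xmin xmax ymin ymax : R.
Variables sL sR sB sT : pt * pt.
Hypothesis Hc : rect_convex V.
Hypothesis Hbd : forall w, region V w -> xmin <= px w <= xmax /\ ymin <= py w <= ymax.
Hypothesis RL : region V eL.
Hypothesis RR : region V eR.
Hypothesis RB : region V eB.
Hypothesis RT : region V eT.
Hypothesis XL : px eL = xmin.
Hypothesis XR : px eR = xmax.
Hypothesis YB : py eB = ymin.
Hypothesis YT : py eT = ymax.
Hypothesis CL : forall w, region V w -> py w = py eL -> seg_of sL w.
Hypothesis CR : forall w, region V w -> py w = py eR -> seg_of sR w.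
Hypothesis CB : forall w, region V w -> px w = px eB -> seg_of sB w.
Hypothesis CT : forall w, region V w -> px w = px eT -> seg_of sT w.

Ltac crossy u v y := let x := fresh "x" in let Bx := fresh "Bx" in let Rx := fresh "Rx" in
  destruct (cross_y V u v Hc ltac:(assumption) ltac:(assumption) y ltac:(solve_btw)) as [x [Bx Rx]].
Ltac crossx u v x := let y := fresh "y" in let By := fresh "By" in let Ry := fresh "Ry" in
  destruct (cross_x V u v Hc ltac:(assumption) ltac:(assumption) x ltac:(solve_btw)) as [y [By Ry]].

Lemma bL : xmin <= px eL <= xmax /\ ymin <= py eL <= ymax. Proof. apply Hbd; auto. Qed.
Lemma bR : xmin <= px eR <= xmax /\ ymin <= py eR <= ymax. Proof. apply Hbd; auto. Qed.
Lemma bB : xmin <= px eB <= xmax /\ ymin <= py eB <= ymax. Proof. apply Hbd; auto. Qed.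
Lemma bT : xmin <= px eT <= xmax /\ ymin <= py eT <= ymax. Proof. apply Hbd; auto. Qed.

Section Case1.
Hypothesis O1 : py eL < py eR.
Hypothesis O2 : px eT < px eB.

Lemma F1 : forall x y, region V (x, y) -> py eL <= y -> region V (px eT, y).
Proof.
  intros x y Hr Hy. destruct (Hbd _ Hr) as [_ [_ Hy2]]; simpl in Hy2.
  pose proof bL; pose proof bR; pose proof bB; pose proof bT.
  crossy eT eL y.
  destruct (Rle_lt_dec (py eR) y).
  - crossy eT eR y. apply fill_row with x0 x1; auto. solve_btw.
  - crossy eB eR y. apply fill_row with x0 x1; auto. solve_btw.
Qed.

Lemma F2 : forall x y, region V (x, y) -> y <= py eR -> region V (px eB, y).
Proof.
  intros x y Hr Hy. destruct (Hbd _ Hr) as [_ [Hy2 _]]; simpl in Hy2.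
  pose proof bL; pose proof bR; pose proof bB; pose proof bT.
  crossy eB eR y.
  destruct (Rle_lt_dec y (py eL)).
  - crossy eB eL y. apply fill_row with x0 x1; auto. solve_btw.
  - crossy eT eL y. apply fill_row with x0 x1; auto. solve_btw.
Qed.

Lemma F3 : forall x y, region V (x, y) -> x <= px eB -> region V (x, py eL).
Proof.
  intros x y Hr Hx. destruct (Hbd _ Hr) as [[Hx2 _] _]; simpl in Hx2.
  pose proof bL; pose proof bR; pose proof bB; pose proof bT.
  crossx eL eB x.
  destruct (Rle_lt_dec x (px eT)).
  - crossx eL eT x. apply fill_col with y0 y1; auto. solve_btw.
  - crossx eT eR x. apply fill_col with y0 y1; auto. solve_btw.
Qed.

Lemma F4 : forall x y, region V (x, y) -> px eT <= x -> region V (x, py eR).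
Proof.
  intros x y Hr Hx. destruct (Hbd _ Hr) as [[_ Hx2] _]; simpl in Hx2.
  pose proof bL; pose proof bR; pose proof bB; pose proof bT.
  crossx eT eR x.
  destruct (Rle_lt_dec (px eB) x).
  - crossx eB eR x. apply fill_col with y0 y1; auto. solve_btw.
  - crossx eL eB x. apply fill_col with y0 y1; auto. solve_btw.
Qed.
End Case1.

Section Case2.
Hypothesis O1 : py eR < py eL.
Hypothesis O2 : px eB < px eT.

Lemma G1 : forall x y, region V (x, y) -> py eR <= y -> region V (px eT, y).
Proof.
  intros x y Hr Hy. destruct (Hbd _ Hr) as [_ [_ Hy2]]; simpl in Hy2.
  pose proof bL; pose proof bR; pose proof bB; pose proof bT.
  crossy eT eR y.
  destruct (Rle_lt_dec (py eL) y).
  - crossy eT eL y. apply fill_row with x0 x1; auto. solve_btw.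
  - crossy eB eL y. apply fill_row with x0 x1; auto. solve_btw.
Qed.

Lemma G2 : forall x y, region V (x, y) -> y <= py eL -> region V (px eB, y).
Proof.
  intros x y Hr Hy. destruct (Hbd _ Hr) as [_ [Hy2 _]]; simpl in Hy2.
  pose proof bL; pose proof bR; pose proof bB; pose proof bT.
  crossy eB eL y.
  destruct (Rle_lt_dec y (py eR)).
  - crossy eB eR y. apply fill_row with x0 x1; auto. solve_btw.
  - crossy eT eR y. apply fill_row with x0 x1; auto. solve_btw.
Qed.

Lemma G3 : forall x y, region V (x, y) -> x <= px eT -> region V (x, py eL).
Proof.
  intros x y Hr Hx. destruct (Hbd _ Hr) as [[Hx2 _] _]; simpl in Hx2.
  pose proof bL; pose proof bR; pose proof bB; pose proof bT.
  crossx eL eT x.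
  destruct (Rle_lt_dec x (px eB)).
  - crossx eL eB x. apply fill_col with y0 y1; auto. solve_btw.
  - crossx eB eR x. apply fill_col with y0 y1; auto. solve_btw.
Qed.

Lemma G4 : forall x y, region V (x, y) -> px eB <= x -> region V (x, py eR).
Proof.
  intros x y Hr Hx. destruct (Hbd _ Hr) as [[_ Hx2] _]; simpl in Hx2.
  pose proof bL; pose proof bR; pose proof bB; pose proof bT.
  crossx eB eR x.
  destruct (Rle_lt_dec (px eT) x).
  - crossx eT eR x. apply fill_col with y0 y1; auto. solve_btw.
  - crossx eL eT x. apply fill_col with y0 y1; auto. solve_btw.
Qed.
End Case2.

Hypothesis Ord : (py eL < py eR /\ px eT < px eB) \/ (py eR < py eL /\ px eB < px eT).

Lemma KT p q : ~ interior (region V) p -> ~ interior (region V) q ->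
  meets (Lpath p q true) (interior (region V)) -> meets (Lpath p q false) (interior (region V)) ->
  exists s, In s (sL :: sR :: sB :: sT :: nil) /\ meets (Lpath p q true) (seg_of s).
Proof.
  intros Np Nq [z [Hz Iz]] [z' [Hz' Iz']].
  rewrite interior_IntC in Np, Nq, Iz, Iz'.
  rewrite Lpath_true in Hz. rewrite Lpath_false in Hz'.
  destruct Ord as [[O1 O2]|[O1 O2]].
  - destruct (core (Rgn V) (px eT) (px eB) (py eL) (py eR) O2 O1) with
      (a1 := px p) (b1 := py p) (a2 := px q) (b2 := py q) as [x [y [Ho [Hr Hl]]]].
    + intros x y x' H Hy B. apply fill_row with x (px eT); auto. apply F1 with x; auto.
    + intros x y x' H Hy B. apply fill_row with x (px eB); auto. apply F2 with x; auto.
    + intros x y y' H Hx B. apply fill_col with y (py eL); auto. apply F3 with y; auto.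
    + intros x y y' H Hx B. apply fill_col with y (py eR); auto. apply F4 with y; auto.
    + auto.
    + auto.
    + exists (px z), (py z). auto.
    + exists (px z'), (py z'). auto.
    + assert (HP : Lpath p q true (x, y)) by (apply Lpath_true; auto).
      unfold Rgn in Hr.
      destruct Hl as [E|[E|[E|E]]].
      * exists sT. split; [simpl; tauto|]. exists (x, y). split; [exact HP|]. apply CT; [exact Hr | simpl; lra].
      * exists sB. split; [simpl; tauto|]. exists (x, y). split; [exact HP|]. apply CB; [exact Hr | simpl; lra].
      * exists sL. split; [simpl; tauto|]. exists (x, y). split; [exact HP|]. apply CL; [exact Hr | simpl; lra].
      * exists sR. split; [simpl; tauto|]. exists (x, y). split; [exact HP|]. apply CR; [exact Hr | simpl; lra].
  - assert (O1' : - py eL < - py eR) by lra.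
    destruct (core (fun x y => Rgn V x (- y)) (px eB) (px eT) (- py eL) (- py eR) O2 O1') with
      (a1 := px p) (b1 := - py p) (a2 := px q) (b2 := - py q) as [x [y [Ho [Hr Hl]]]].
    + intros x y x' H Hy B. apply fill_row with x (px eB); auto. apply G2 with x; auto; lra.
    + intros x y x' H Hy B. apply fill_row with x (px eT); auto. apply G1 with x; auto; lra.
    + intros x y y' H Hx B. unfold Rgn in *. apply fill_col with (- y) (py eL); auto.
      apply G3 with (- y); auto. clear -B. unfold btw in *. destruct B; [right|left]; lra.
    + intros x y y' H Hx B. unfold Rgn in *. apply fill_col with (- y) (py eR); auto.
      apply G4 with (- y); auto. clear -B. unfold btw in *. destruct B; [right|left]; lra.
    + rewrite IntC_mirror. rewrite Ropp_involutive. auto.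
    + rewrite IntC_mirror. rewrite Ropp_involutive. auto.
    + exists (px z), (- py z). split; [apply onP_m1; auto|]. rewrite IntC_mirror, Ropp_involutive; auto.
    + exists (px z'), (- py z'). split; [apply onP'_m1; auto|]. rewrite IntC_mirror, Ropp_involutive; auto.
    + assert (HP : Lpath p q true (x, - y)).
      { apply Lpath_true. simpl. apply onP_m2. auto. }
      unfold Rgn in Hr.
      destruct Hl as [E|[E|[E|E]]].
      * exists sB. split; [simpl; tauto|]. exists (x, - y). split; [exact HP|]. apply CB; [exact Hr | simpl; lra].
      * exists sT. split; [simpl; tauto|]. exists (x, - y). split; [exact HP|]. apply CT; [exact Hr | simpl; lra].
      * exists sL. split; [simpl; tauto|]. exists (x, - y). split; [exact HP|]. apply CL; [exact Hr | simpl; lra].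
      * exists sR. split; [simpl; tauto|]. exists (x, - y). split; [exact HP|]. apply CR; [exact Hr | simpl; lra].
Qed.

End KT.

Definition psi (al be : R) (w : pt) : R := - be * px w + al * py w.
Definition PP (al be f g : R) : pt := (al * f - be * g, be * f + al * g).

Ltac axc Hax := destruct Hax as [[-> [-> | ->]]|[-> [-> | ->]]].

Section Ax.
Variables al be : R.
Hypothesis Hax : axis al be.

Lemma phi_PP f g : phi al be (PP al be f g) = f.
Proof. unfold phi, PP, px, py; simpl. axc Hax; ring. Qed.
Lemma psi_PP f g : psi al be (PP al be f g) = g.
Proof. unfold psi, PP, px, py; simpl. axc Hax; ring. Qed.
Lemma PP_eta w : w = PP al be (phi al be w) (psi al be w).
Proof. unfold phi, psi, PP. rewrite (pt_eta w) at 1. unfold px, py; simpl. axc Hax; f_equal; ring. Qed.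

Lemma pt_eq_pp u v : phi al be u = phi al be v -> psi al be u = psi al be v -> u = v.
Proof. intros E1 E2. rewrite (PP_eta u), (PP_eta v), E1, E2. reflexivity. Qed.

Lemma seg_pp a b w : seg a b w <-> exists t, 0 <= t <= 1 /\
  phi al be w = phi al be a + t * (phi al be b - phi al be a) /\
  psi al be w = psi al be a + t * (psi al be b - psi al be a).
Proof.
  split.
  - intros [t [Ht [Hx Hy]]]. exists t. split; auto. unfold phi, psi. rewrite Hx, Hy. split; ring.
  - intros [t [Ht [E1 E2]]]. exists t. split; auto.
    rewrite (PP_eta w), E1, E2. unfold PP, phi, psi, px, py; simpl. fold (px a) (py a) (px b) (py b).
    axc Hax; split; ring.
Qed.

Lemma seg_line a b w : phi al be a = phi al be b ->
  (seg a b w <-> phi al be w = phi al be a /\ btw (psi al be a) (psi al be b) (psi al be w)).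
Proof.
  intros E. rewrite seg_pp. split.
  - intros [t [Ht [E1 E2]]]. split; [rewrite E1, E; ring|]. rewrite E2. apply btw_lin; auto.
  - intros [E1 B]. destruct (btw_param _ _ _ B) as [t [Ht E2]]. exists t. split; auto.
    split; auto. rewrite E1, E. ring.
Qed.

Lemma seg_perp a b w : psi al be a = psi al be b ->
  (seg a b w <-> psi al be w = psi al be a /\ btw (phi al be a) (phi al be b) (phi al be w)).
Proof.
  intros E. rewrite seg_pp. split.
  - intros [t [Ht [E1 E2]]]. split; [rewrite E2, E; ring|]. rewrite E1. apply btw_lin; auto.
  - intros [E1 B]. destruct (btw_param _ _ _ B) as [t [Ht E2]]. exists t. split; auto.
    split; auto. rewrite E1, E. ring.
Qed.

Lemma line_aligned a b : phi al be a = phi al be b -> px a = px b \/ py a = py b.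
Proof. unfold phi. intros E. axc Hax; [right|right|left|left]; lra. Qed.

Lemma conv_line V a b : rect_convex V -> region V a -> region V b ->
  phi al be a = phi al be b -> subset (seg a b) (region V).
Proof.
  intros Hc Ha Hb E. destruct (line_aligned a b E) as [E'|E'].
  - apply conv_col_seg; auto.
  - apply conv_row_seg; auto.
Qed.

Lemma abs_pm u v r : Rabs u < r -> (v = u \/ v = - u) -> Rabs v < r.
Proof. intros H [->| ->]; auto. rewrite Rabs_Ropp; auto. Qed.

Lemma dinf_pp z w r : Rabs (phi al be w - phi al be z) < r -> Rabs (psi al be w - psi al be z) < r ->
  dinf z w < r.
Proof.
  unfold dinf, phi, psi. intros H1 H2. apply Rmax_lub_lt; axc Hax;
  first [ apply (abs_pm _ _ _ H1); first [left; ring | right; ring]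
        | apply (abs_pm _ _ _ H2); first [left; ring | right; ring] ].
Qed.

Lemma psi_bound w K : Rabs (px w) <= K -> Rabs (py w) <= K -> Rabs (psi al be w) <= K.
Proof. unfold psi. intros. axc Hax; rabs. Qed.


End Ax.

Lemma list_gap {X : Type} (l : list X) (f : X -> R) M :
  (forall x, In x l -> f x < M) -> exists g, 0 < g /\ forall x, In x l -> f x <= M - g.
Proof.
  induction l as [|a l IH]; intros H.
  - exists 1. split; [lra|]. intros x [].
  - destruct IH as [g [Hg Hl]]. { intros x Hx. apply H. right; auto. }
    assert (Ha : f a < M) by (apply H; left; auto).
    exists (Rmin g (M - f a)). split.
    + apply Rmin_glb_lt; lra.
    + intros x [E|Hx].
      * rewrite <- E. pose proof (Rmin_r g (M - f a)). lra.
      * pose proof (Rmin_l g (M - f a)). specialize (Hl x Hx). lra.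
Qed.

Lemma interior_in (A : pt -> Prop) w : interior A w -> A w.
Proof.
  intros [e [He H]]. apply H. unfold dinf. replace (px w - px w) with 0 by ring.
  replace (py w - py w) with 0 by ring. rewrite Rabs_R0. unfold Rmax. destruct Rle_dec; lra.
Qed.

Lemma Lpath_aligned p q k w : (px p = px q \/ py p = py q) -> (Lpath p q k w <-> seg p q w).
Proof.
  intros [E|E]; unfold Lpath; destruct k.
  - rewrite !seg_col by (simpl; auto). simpl. split.
    + intros [[H1 H2]|[H1 H2]]; split; auto; solve_btw.
    + intros [H1 H2]. right. split; [lra|]. auto.
  - rewrite !seg_col by (simpl; auto). simpl. split.
    + intros [[H1 H2]|[H1 H2]]; split; auto; solve_btw.
    + intros [H1 H2]. left. split; auto.
  - rewrite !seg_row by (simpl; auto). simpl. split.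
    + intros [[H1 H2]|[H1 H2]]; split; auto; solve_btw.
    + intros [H1 H2]. left. split; auto.
  - rewrite !seg_row by (simpl; auto). simpl. split.
    + intros [[H1 H2]|[H1 H2]]; split; auto; solve_btw.
    + intros [H1 H2]. right. split; [lra|]. auto.
Qed.

Section Touch.
Variables al be : R.
Hypothesis Hax : axis al be.

Lemma dinf_pp_inv z w r : dinf z w < r ->
  Rabs (phi al be w - phi al be z) < r /\ Rabs (psi al be w - psi al be z) < r.
Proof.
  unfold dinf, phi, psi. intros H.
  pose proof (Rmax_l (Rabs (px w - px z)) (Rabs (py w - py z))).
  pose proof (Rmax_r (Rabs (px w - px z)) (Rabs (py w - py z))).
  assert (Hx : Rabs (px w - px z) < r) by lra. assert (Hy : Rabs (py w - py z) < r) by lra.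
  axc Hax; split;
  first [ apply (abs_pm _ _ _ Hx); first [left; ring | right; ring]
        | apply (abs_pm _ _ _ Hy); first [left; ring | right; ring] ].
Qed.

Lemma perp_psi u v : (px u = px v \/ py u = py v) -> phi al be u <> phi al be v ->
  psi al be u = psi al be v.
Proof. unfold phi, psi. intros [E|E] N; axc Hax; try lra; exfalso; apply N; lra. Qed.

Lemma line_phi_aligned p q : phi al be p = phi al be q -> px p = px q \/ py p = py q.
Proof. apply line_aligned; auto. Qed.

Variable V : list pt.
Variable i : nat.
Variable S' : list (pt * pt).
Variable K : R.
Hypothesis Hob : obstacle V.
Hypothesis Hrl : rectilinear V.
Hypothesis Hc : rect_convex V.
Hypothesis He : ext_edge V al be i.
Hypothesis HK : forall w, region V w -> Rabs (px w) <= K /\ Rabs (py w) <= K.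
Hypothesis Hsk : skeleton V S'.

Lemma touch : exists s, In s S' /\ (edge_pts V i (fst s) \/ edge_pts V i (snd s)).
Proof.
  apply NNPP; intro Hno.
  set (M := phi al be (vtx V i)).
  assert (H3 : (3 <= nv V)%nat) by (destruct Hob as [[H _] _]; auto).
  destruct He as [Hi HE].
  assert (Hn : (nxt V i < nv V)%nat) by (apply nxt_lt; lia).
  assert (Hnn : (nxt V (nxt V i) < nv V)%nat) by (apply nxt_lt; lia).
  destruct (prev_ex V i H3 Hi) as [j [Hj [Hji [Hjn1 Hjn2]]]].
  set (A := vtx V i). set (B := vtx V (nxt V i)). set (C := vtx V (nxt V (nxt V i))).
  set (D := vtx V j).
  assert (EB : phi al be B = M) by (destruct (HE i Hi); destruct (HE (nxt V i) Hn); unfold B, M; lra).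
  assert (HgpC : phi al be C < M).
  { destruct (HE (nxt V (nxt V i)) Hnn) as [H1 _]. fold C M in H1.
    destruct (Req_dec (phi al be C) M) as [E|E]; [|lra]. exfalso.
    destruct Hob as [_ Hgp]. apply (Hgp i (nxt V i) (nxt V (nxt V i)) Hi Hn Hnn).
    - intro X. apply (nxt_neq V i H3 Hi). symmetry; exact X.
    - intro X. apply (nxt_neq V (nxt V i) H3 Hn). symmetry; exact X.
    - intro X. apply (nxt_nxt_neq V i H3 Hi). symmetry; exact X.
    - apply axis_eq_coll with al be; auto; fold A B C; unfold M in *; fold A in *; lra. }
  assert (HgpD : phi al be D < M).
  { destruct (HE j Hj) as [H1 _]. fold D M in H1.
    destruct (Req_dec (phi al be D) M) as [E|E]; [|lra]. exfalso.
    destruct Hob as [_ Hgp]. apply (Hgp i (nxt V i) j Hi Hn Hj).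
    - intro X. apply (nxt_neq V i H3 Hi). symmetry; exact X.
    - intro X. apply Hjn2. symmetry; exact X.
    - intro X. apply Hjn1. symmetry; exact X.
    - apply axis_eq_coll with al be; auto; fold A B D; unfold M in *; fold A in *; lra. }
  assert (PsC : psi al be C = psi al be B).
  { symmetry. apply perp_psi; [apply Hrl; auto| fold B C; lra]. }
  assert (PsD : psi al be D = psi al be A).
  { apply perp_psi.
    - pose proof (Hrl j Hj) as X. rewrite Hji in X. exact X.
    - fold D. unfold M in HgpD. fold A in HgpD. lra. }
  assert (NAB : psi al be A <> psi al be B).
  { intro X. destruct Hob as [[_ [Hnd _]] _]. apply (vtx_inj V i (nxt V i) Hnd Hi Hn).
    - intro Y. apply (nxt_neq V i H3 Hi). symmetry; exact Y.
    - apply (pt_eq_pp al be Hax); [|exact X]. unfold M in EB. fold A in EB. fold A B. lra. }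
  set (delta := Rmin (M - phi al be C) (M - phi al be D)).
  assert (Hdel : 0 < delta) by (apply Rmin_glb_lt; lra).
  pose proof (Rmin_l (M - phi al be C) (M - phi al be D)) as Hd1.
  pose proof (Rmin_r (M - phi al be C) (M - phi al be D)) as Hd2. fold delta in Hd1, Hd2.
  assert (Fill : forall f g, M - delta <= f <= M -> btw (psi al be A) (psi al be B) g ->
            region V (PP al be f g)).
  { intros f g Hf Hg.
    assert (R1 : region V (PP al be f (psi al be B))).
    { apply (edge_region V (nxt V i)); auto. unfold edge_pts.
      change (seg B C (PP al be f (psi al be B))).
      apply (seg_perp al be Hax); [symmetry; exact PsC|]. rewrite psi_PP, phi_PP by auto. split; auto.
      rewrite EB. unfold btw; lra. }
    assert (R2 : region V (PP al be f (psi al be A))).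
    { apply (edge_region V j); auto. unfold edge_pts. rewrite Hji.
      change (seg D A (PP al be f (psi al be A))).
      apply (seg_perp al be Hax); [exact PsD|]. rewrite psi_PP, phi_PP by auto. split; auto.
      assert (EA : phi al be A = M) by reflexivity. rewrite EA. unfold btw; lra. }
    apply (conv_line al be Hax V _ _ Hc R1 R2); [rewrite !phi_PP by auto; auto|].
    apply (seg_line al be Hax); [rewrite !phi_PP by auto; auto|].
    rewrite !phi_PP, !psi_PP by auto. split; auto. apply btw_sym; auto. }
  assert (Hall : forall s, In s S' -> Rmax (phi al be (fst s)) (phi al be (snd s)) < M).
  { intros s Hs. destruct Hsk as [Hin _]. destruct (Hin s Hs) as [_ Hsub].
    assert (R1 : region V (fst s)) by (apply Hsub, seg_l).
    assert (R2 : region V (snd s)) by (apply Hsub, seg_r).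
    assert (L1 : phi al be (fst s) < M).
    { pose proof (region_le V al be i _ Hax (conj Hi HE) R1). fold M in H.
      destruct (Req_dec (phi al be (fst s)) M); [|lra]. exfalso. apply Hno. exists s. split; auto.
      left. apply (region_on_edge V al be i); [exact Hob | exact Hax | split; [exact Hi | exact HE] | exact R1 | fold M; lra]. }
    assert (L2 : phi al be (snd s) < M).
    { pose proof (region_le V al be i _ Hax (conj Hi HE) R2). fold M in H.
      destruct (Req_dec (phi al be (snd s)) M); [|lra]. exfalso. apply Hno. exists s. split; auto.
      right. apply (region_on_edge V al be i); [exact Hob | exact Hax | split; [exact Hi | exact HE] | exact R2 | fold M; lra]. }
    unfold Rmax; destruct Rle_dec; lra. }
  destruct (list_gap S' (fun s => Rmax (phi al be (fst s)) (phi al be (snd s))) M Hall) as [g [Hg Hgap]].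
  set (eps := Rmin g delta / 2).
  assert (Heps : 0 < eps /\ eps < g /\ eps < delta).
  { pose proof (Rmin_l g delta). pose proof (Rmin_r g delta).
    assert (0 < Rmin g delta) by (apply Rmin_glb_lt; lra). unfold eps. lra. }
  destruct Heps as [He1 [He2 He3]].
  assert (RA : region V A) by (apply (edge_region V i); auto; apply seg_l).
  assert (RB : region V B) by (apply (edge_region V i); auto; apply seg_r).
  destruct (HK A RA) as [KA1 KA2]. destruct (HK B RB) as [KB1 KB2].
  pose proof (psi_bound al be Hax A K KA1 KA2) as PA.
  pose proof (psi_bound al be Hax B K KB1 KB2) as PB.
  set (mid := (psi al be A + psi al be B) / 2).
  set (z := PP al be (M - eps) mid).
  set (p := PP al be (M - eps) (- K - 1)).
  set (q := PP al be (M - eps) (K + 1)).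
  assert (Hz : interior (region V) z).
  { set (r := Rmin eps (Rmin (delta - eps) (Rabs (psi al be A - psi al be B) / 2))).
    assert (Hr : 0 < r).
    { assert (0 < Rabs (psi al be A - psi al be B)) by (apply Rabs_pos_lt; lra).
      unfold r. repeat apply Rmin_glb_lt; lra. }
    pose proof (Rmin_l eps (Rmin (delta - eps) (Rabs (psi al be A - psi al be B) / 2))).
    pose proof (Rmin_r eps (Rmin (delta - eps) (Rabs (psi al be A - psi al be B) / 2))).
    pose proof (Rmin_l (delta - eps) (Rabs (psi al be A - psi al be B) / 2)).
    pose proof (Rmin_r (delta - eps) (Rabs (psi al be A - psi al be B) / 2)).
    fold r in H, H0.
    exists r. split; auto. intros w Hw. apply dinf_pp_inv in Hw.
    unfold z in Hw. rewrite phi_PP, psi_PP in Hw by auto. destruct Hw as [W1 W2].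
    rewrite (PP_eta al be Hax w). apply Fill.
    - rabs.
    - unfold mid in W2. unfold btw. rabs. }
  assert (Np : ~ interior (region V) p).
  { intro X. apply interior_in in X. destruct (HK p X) as [K1 K2].
    pose proof (psi_bound al be Hax p K K1 K2). unfold p in H. rewrite psi_PP in H by auto. rabs. }
  assert (Nq : ~ interior (region V) q).
  { intro X. apply interior_in in X. destruct (HK q X) as [K1 K2].
    pose proof (psi_bound al be Hax q K K1 K2). unfold q in H. rewrite psi_PP in H by auto. rabs. }
  assert (Al : px p = px q \/ py p = py q).
  { apply line_phi_aligned. unfold p, q. rewrite !phi_PP by auto. auto. }
  assert (Zpq : seg p q z).
  { apply (seg_line al be Hax); [unfold p, q; rewrite !phi_PP by auto; auto|].
    unfold p, q, z. rewrite !phi_PP, !psi_PP by auto. split; auto. unfold mid, btw. rabs. }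
  destruct Hsk as [_ Hsk2].
  destruct (Hsk2 p q Np Nq) with (k := true) as [s [Hs [w [Hw1 Hw2]]]].
  { intros k. exists z. split; auto. apply Lpath_aligned; auto. }
  apply (Lpath_aligned p q true w Al) in Hw1.
  apply (seg_line al be Hax) in Hw1; [|unfold p, q; rewrite !phi_PP by auto; auto].
  destruct Hw1 as [Ew _]. unfold p in Ew. rewrite phi_PP in Ew by auto.
  pose proof (Hgap s Hs) as G. simpl in G.
  assert (phi al be w <= Rmax (phi al be (fst s)) (phi al be (snd s))).
  { apply (seg_phi_le al be (fst s) (snd s) w); auto. apply Rmax_l. apply Rmax_r. }
  lra.
Qed.

End Touch.

Lemma ax_l : axis (-1) 0. Proof. right. split; [reflexivity | right; reflexivity]. Qed.
Lemma ax_r : axis 1 0. Proof. right. split; [reflexivity | left; reflexivity]. Qed.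
Lemma ax_b : axis 0 (-1). Proof. left. split; [reflexivity | right; reflexivity]. Qed.
Lemma ax_t : axis 0 1. Proof. left. split; [reflexivity | left; reflexivity]. Qed.

Lemma no_share V s i j u v :
  (forall i j, extreme_edge V i -> extreme_edge V j -> i <> j ->
     ~ mutually_visible (region V) (edge_pts V i) (edge_pts V j)) ->
  extreme_edge V i -> extreme_edge V j -> i <> j ->
  subset (seg_of s) (region V) -> seg_of s u -> seg_of s v ->
  edge_pts V i u -> edge_pts V j v -> False.
Proof.
  intros Hmv Ei Ej Nij Hsub Hu Hv Eu Ev. apply (Hmv i j Ei Ej Nij).
  exists u, v. split; auto. split; auto. intros w Hw. apply Hsub. apply (seg_sub _ _ _ _ Hu Hv). auto.
Qed.

Lemma sep a b c d y1 y2 : ~ intervals_meet a b c d -> (a + b) / 2 < (c + d) / 2 ->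
  btw a b y1 -> btw c d y2 -> y1 < y2.
Proof.
  unfold intervals_meet, Rmax, Rmin, btw. intros H M B1 B2.
  repeat destruct Rle_dec; lra.
Qed.
Lemma sep' a b c d y1 y2 : ~ intervals_meet a b c d -> (c + d) / 2 < (a + b) / 2 ->
  btw a b y1 -> btw c d y2 -> y2 < y1.
Proof.
  unfold intervals_meet, Rmax, Rmin, btw. intros H M B1 B2.
  repeat destruct Rle_dec; lra.
Qed.

Lemma meet_self a b : intervals_meet a b a b.
Proof. unfold intervals_meet, Rmax, Rmin. repeat destruct Rle_dec; lra. Qed.

Lemma hv_neq V i j : obstacle V -> (i < nv V)%nat ->
  px (vtx V i) = px (vtx V (nxt V i)) -> py (vtx V j) = py (vtx V (nxt V j)) -> i <> j.
Proof.
  intros [[H3 [Hnd _]] _] Hi E1 E2 ->.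
  apply (vtx_inj V j (nxt V j) Hnd Hi (nxt_lt V j ltac:(lia))).
  - intro X. apply (nxt_neq V j H3 Hi). symmetry; exact X.
  - rewrite (pt_eta (vtx V j)), (pt_eta (vtx V (nxt V j))), E1, E2. reflexivity.
Qed.

Lemma nodup4 {X : Type} (a b c d : X) : a <> b -> a <> c -> a <> d -> b <> c -> b <> d -> c <> d ->
  NoDup (a :: b :: c :: d :: nil).
Proof.
  intros. repeat constructor; simpl; intuition.
Qed.

Theorem lemma20' (V : list pt) (iL iR iB iT : nat) (sL sR sB sT : pt * pt) :
  typeC V iL iR iB iT ->
  (forall i j, extreme_edge V i -> extreme_edge V j -> i <> j ->
     ~ mutually_visible (region V) (edge_pts V i) (edge_pts V j)) ->
  perp_ext_vis_edge V sL iL -> perp_ext_vis_edge V sR iR ->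
  perp_ext_vis_edge V sB iB -> perp_ext_vis_edge V sT iT ->
  minimum_skeleton V (sL :: sR :: sB :: sT :: nil).
Proof.
  intros Htc Hmv HpL HpR HpB HpT.
  destruct Htc as [[Hob [Hrl [Hc Hnc]]] [HL [HR [HB [HT [NOv [NOh Hsl]]]]]]].
  assert (H3 : (3 <= nv V)%nat) by (destruct Hob as [[H _] _]; auto).
  pose proof (left_ext V iL HL) as EL. pose proof (right_ext V iR HR) as ER.
  pose proof (bottom_ext V iB HB) as EB. pose proof (top_ext V iT HT) as ET.
  assert (iLn : (iL < nv V)%nat) by (destruct HL; auto).
  assert (iRn : (iR < nv V)%nat) by (destruct HR; auto).
  assert (iBn : (iB < nv V)%nat) by (destruct HB; auto).
  assert (iTn : (iT < nv V)%nat) by (destruct HT; auto).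
  assert (vL : px (vtx V iL) = px (vtx V (nxt V iL))).
  { destruct HL as [_ H]. destruct (H iL iLn). destruct (H (nxt V iL) (nxt_lt V iL ltac:(lia))). lra. }
  assert (vR : px (vtx V iR) = px (vtx V (nxt V iR))).
  { destruct HR as [_ H]. destruct (H iR iRn). destruct (H (nxt V iR) (nxt_lt V iR ltac:(lia))). lra. }
  assert (hB : py (vtx V iB) = py (vtx V (nxt V iB))).
  { destruct HB as [_ H]. destruct (H iB iBn). destruct (H (nxt V iB) (nxt_lt V iB ltac:(lia))). lra. }
  assert (hT : py (vtx V iT) = py (vtx V (nxt V iT))).
  { destruct HT as [_ H]. destruct (H iT iTn). destruct (H (nxt V iT) (nxt_lt V iT ltac:(lia))). lra. }
  destruct (chord_h V sL iL Hob Hc iLn vL HpL) as [eL [EdL [SL [CL [NL IL]]]]].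
  destruct (chord_h V sR iR Hob Hc iRn vR HpR) as [eR [EdR [SR [CR [NR IR]]]]].
  destruct (chord_v V sB iB Hob Hc iBn hB HpB) as [eB [EdB [SB [CB [NB IB]]]]].
  destruct (chord_v V sT iT Hob Hc iTn hT HpT) as [eT [EdT [ST [CT [NT IT]]]]].
  set (xmin := px (vtx V iL)). set (xmax := px (vtx V iR)).
  set (ymin := py (vtx V iB)). set (ymax := py (vtx V iT)).
  assert (Hbd : forall w, region V w -> xmin <= px w <= xmax /\ ymin <= py w <= ymax).
  { intros w Hw.
    pose proof (region_le V _ _ iL w ax_l EL Hw).
    pose proof (region_le V _ _ iR w ax_r ER Hw).
    pose proof (region_le V _ _ iB w ax_b EB Hw).
    pose proof (region_le V _ _ iT w ax_t ET Hw).
    unfold phi in *. unfold xmin, xmax, ymin, ymax. lra. }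
  assert (RL : region V eL) by (apply (edge_region V iL); auto).
  assert (RR : region V eR) by (apply (edge_region V iR); auto).
  assert (RB : region V eB) by (apply (edge_region V iB); auto).
  assert (RT : region V eT) by (apply (edge_region V iT); auto).
  unfold edge_pts in EdL, EdR, EdB, EdT.
  pose proof EdL as EdL'. pose proof EdR as EdR'. pose proof EdB as EdB'. pose proof EdT as EdT'.
  apply seg_col in EdL'; auto. apply seg_col in EdR'; auto.
  apply seg_row in EdB'; auto. apply seg_row in EdT'; auto.
  destruct EdL' as [XL BL]. destruct EdR' as [XR BR]. destruct EdB' as [YB BB]. destruct EdT' as [YT BT].
  assert (Ord : (py eL < py eR /\ px eT < px eB) \/ (py eR < py eL /\ px eB < px eT)).
  { assert (Dx : px (emid V iR) - px (emid V iL) = xmax - xmin).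
    { unfold emid, midpt, px at 1 3; simpl. fold (px (vtx V iR)) (px (vtx V (nxt V iR))).
      fold (px (vtx V iL)) (px (vtx V (nxt V iL))). rewrite <- vR, <- vL. unfold xmin, xmax. field. }
    assert (Dy : py (emid V iT) - py (emid V iB) = ymax - ymin).
    { unfold emid, midpt, py at 1 3; simpl. fold (py (vtx V iT)) (py (vtx V (nxt V iT))).
      fold (py (vtx V iB)) (py (vtx V (nxt V iB))). rewrite <- hT, <- hB. unfold ymin, ymax. field. }
    assert (Gx : xmin <= xmax) by (destruct (Hbd eL RL); lra).
    assert (Gy : ymin <= ymax) by (destruct (Hbd eB RB); lra).
    assert (MyL : py (emid V iL) = (py (vtx V iL) + py (vtx V (nxt V iL))) / 2) by reflexivity.
    assert (MyR : py (emid V iR) = (py (vtx V iR) + py (vtx V (nxt V iR))) / 2) by reflexivity.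
    assert (MxB : px (emid V iB) = (px (vtx V iB) + px (vtx V (nxt V iB))) / 2) by reflexivity.
    assert (MxT : px (emid V iT) = (px (vtx V iT) + px (vtx V (nxt V iT))) / 2) by reflexivity.
    unfold pos_sloped, neg_sloped in Hsl. unfold overlap_vert in NOv. unfold overlap_horiz in NOh.
    destruct Hsl as [[P1 P2]|[P1 P2]].
    - left. rewrite Dx in P1. rewrite Dy in P2.
      assert (A1 : py (emid V iL) < py (emid V iR)) by nra.
      assert (A2 : px (emid V iT) < px (emid V iB)) by nra.
      split.
      + apply (sep _ _ _ _ _ _ NOv); auto; lra.
      + apply (sep' _ _ _ _ _ _ NOh); auto; lra.
    - right. rewrite Dx in P1. rewrite Dy in P2.
      assert (A1 : py (emid V iR) < py (emid V iL)) by nra.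
      assert (A2 : px (emid V iB) < px (emid V iT)) by nra.
      split.
      + apply (sep' _ _ _ _ _ _ NOv); auto; lra.
      + apply (sep _ _ _ _ _ _ NOh); auto; lra. }
  assert (Hsk : skeleton V (sL :: sR :: sB :: sT :: nil)).
  { split.
    - intros s Hs. simpl in Hs. destruct Hs as [<-|[<-|[<-|[<-|[]]]]]; split; auto.
    - intros p q Np Nq Hk k. destruct k.
      + apply (KT V eL eR eB eT xmin xmax ymin ymax sL sR sB sT Hc Hbd RL RR RB RT XL XR YB YT
               CL CR CB CT Ord p q Np Nq (Hk true) (Hk false)).
      + destruct (KT V eL eR eB eT xmin xmax ymin ymax sL sR sB sT Hc Hbd RL RR RB RT XL XR YB YT
               CL CR CB CT Ord q p Nq Np) as [s [Hs [w [Hw1 Hw2]]]].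
        * destruct (Hk false) as [w [Hw1 Hw2]]. exists w. split; auto. apply Lpath_swap; auto.
        * destruct (Hk true) as [w [Hw1 Hw2]]. exists w. split; auto. apply Lpath_swap.
          apply Lpath_swap in Hw1. apply Lpath_swap in Hw1. auto.
        * exists s. split; auto. exists w. split; auto. apply Lpath_swap; auto. }
  split; auto.
  assert (XLe : extreme_edge V iL) by (left; auto).
  assert (XRe : extreme_edge V iR) by (right; left; auto).
  assert (XBe : extreme_edge V iB) by (right; right; left; auto).
  assert (XTe : extreme_edge V iT) by (right; right; right; auto).
  assert (nLR : iL <> iR) by (intros ->; apply NOv; apply meet_self).
  assert (nBT : iB <> iT) by (intros ->; apply NOh; apply meet_self).
  assert (nLB : iL <> iB) by (apply (hv_neq V); auto).
  assert (nLT : iL <> iT) by (apply (hv_neq V); auto).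
  assert (nRB : iR <> iB) by (apply (hv_neq V); auto).
  assert (nRT : iR <> iT) by (apply (hv_neq V); auto).
  intros S' n n' Hsk' [l [Hnd [Hin Hlen]]] [l' [Hnd' [Hin' Hlen']]].
  set (K := Rabs xmin + Rabs xmax + Rabs ymin + Rabs ymax).
  assert (HK : forall w, region V w -> Rabs (px w) <= K /\ Rabs (py w) <= K).
  { intros w Hw. destruct (Hbd w Hw). unfold K. split; rabs. }
  destruct (touch _ _ ax_l V iL S' K Hob Hrl Hc EL HK Hsk') as [tL [InL TL]].
  destruct (touch _ _ ax_r V iR S' K Hob Hrl Hc ER HK Hsk') as [tR [InR TR]].
  destruct (touch _ _ ax_b V iB S' K Hob Hrl Hc EB HK Hsk') as [tB [InB TB]].
  destruct (touch _ _ ax_t V iT S' K Hob Hrl Hc ET HK Hsk') as [tT [InT TT]].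
  assert (Hins : forall s, In s S' -> subset (seg_of s) (region V)).
  { intros s Hs. destruct Hsk' as [Hi _]. apply (Hi s Hs). }
  assert (Dist : forall s i j, In s S' -> i <> j -> extreme_edge V i -> extreme_edge V j ->
            (edge_pts V i (fst s) \/ edge_pts V i (snd s)) ->
            (edge_pts V j (fst s) \/ edge_pts V j (snd s)) -> False).
  { intros s i j Hs Nij Ei Ej Ti Tj.
    pose proof (Hins s Hs) as Hsb.
    assert (F1 : seg_of s (fst s)) by (unfold seg_of; apply seg_l).
    assert (F2 : seg_of s (snd s)) by (unfold seg_of; apply seg_r).
    destruct Ti as [Ti|Ti]; destruct Tj as [Tj|Tj].
    - exact (no_share V s i j _ _ Hmv Ei Ej Nij Hsb F1 F1 Ti Tj).
    - exact (no_share V s i j _ _ Hmv Ei Ej Nij Hsb F1 F2 Ti Tj).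
    - exact (no_share V s i j _ _ Hmv Ei Ej Nij Hsb F2 F1 Ti Tj).
    - exact (no_share V s i j _ _ Hmv Ei Ej Nij Hsb F2 F2 Ti Tj). }
  assert (D1 : NoDup (tL :: tR :: tB :: tT :: nil)).
  { apply nodup4; intros E; subst.
    - apply (Dist tR iL iR); auto.
    - apply (Dist tB iL iB); auto.
    - apply (Dist tT iL iT); auto.
    - apply (Dist tB iR iB); auto.
    - apply (Dist tT iR iT); auto.
    - apply (Dist tT iB iT); auto. }
  assert (D0 : NoDup (sL :: sR :: sB :: sT :: nil)).
  { apply nodup4; intros E; subst.
    - apply (no_share V sR iL iR eL eR); auto.
    - apply (no_share V sB iL iB eL eB); auto.
    - apply (no_share V sT iL iT eL eT); auto.
    - apply (no_share V sB iR iB eR eB); auto.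
    - apply (no_share V sT iR iT eR eT); auto.
    - apply (no_share V sT iB iT eB eT); auto. }
  assert (L1 : (length l <= 4)%nat).
  { change 4%nat with (length (sL :: sR :: sB :: sT :: nil)). apply NoDup_incl_length; auto.
    intros x Hx. apply Hin; auto. }
  assert (L2 : (4 <= length l)%nat).
  { change 4%nat with (length (sL :: sR :: sB :: sT :: nil)). apply NoDup_incl_length; auto.
    intros x Hx. apply Hin; auto. }
  assert (L3 : (4 <= length l')%nat).
  { change 4%nat with (length (tL :: tR :: tB :: tT :: nil)). apply NoDup_incl_length; auto.
    intros x Hx. apply Hin'. simpl in Hx. destruct Hx as [<-|[<-|[<-|[<-|[]]]]]; auto. }
  lia.
Qed.


Theorem lemma20 (V : list pt) (iL iR iB iT : nat) (sL sR sB sT : pt * pt) :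
  typeC V iL iR iB iT ->
  (forall i j, extreme_edge V i -> extreme_edge V j -> i <> j ->
     ~ mutually_visible (region V) (edge_pts V i) (edge_pts V j)) ->
  perp_ext_vis_edge V sL iL -> perp_ext_vis_edge V sR iR ->
  perp_ext_vis_edge V sB iB -> perp_ext_vis_edge V sT iT ->
  minimum_skeleton V (sL :: sR :: sB :: sT :: nil).
Proof.
  exact (lemma20' V iL iR iB iT sL sR sB sT).
Qed.
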